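(* Let $V$ be a grading-restricted vertex algebra, $W$ a $V$-module, $n\in\mathbb Z_+$, and let $\Phi:V^{\otimes n}\to\widetilde W_{z_1,\dots,z_n}$ be a linear map having the $L(-1)$-derivative property. Then: (a) for $v_1,\dots,v_n\in V$, $w'\in W'$, $(z_1,\dots,z_n)\in F_n\mathbb C$ and $z\in\mathbb C$, $$\langle w',e^{zL_W(-1)}\Phi(v_1\otimes\cdots\otimes v_n)(z_1,\dots,z_n)\rangle=\langle w',\Phi(v_1\otimes\cdots\otimes v_n)(z_1+z,\dots,z_n+z)\rangle;$$ (b) for $v_1,\dots,v_n\in V$, $w'\in W'$, $(z_1,\dots,z_n)\in F_n\mathbb C$, $1\le i\le n$ and $z\in\mathbb C$ with $(z_1,\dots,z_{i-1},z_i+z,z_{i+1},\dots,z_n)\in F_n\mathbb C$, the power series expansion in $z$ of $\langle w',\Phi(v_1\otimes\cdots\otimes v_n)(z_1,\dots,z_{i-1},z_i+z,z_{i+1},\dots,z_n)\rangle$ equals the power series $\langle w',\Phi(v_1\otimes\cdots\otimes v_{i-1}\otimes e^{zL_V(-1)}v_i\otimes v_{i+1}\otimes\cdots\otimes v_n)(z_1,\dots,z_n)\rangle$ in $z$; in particular the latter power series converges absolutely to the former function in the disk $|z|<\min_{j\neq k}|z_j-z_k|$.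
   Context: $V$ is a grading-restricted vertex algebra over $\mathbb C$ with vertex operator map $Y_V$, vacuum $\mathbf 1$ and operator $L_V(-1)$ ($L_V(-1)u$ is the coefficient of $x$ in $Y_V(u,x)\mathbf 1$). $W=\coprod_{n\in\mathbb C}W_{(n)}$ is a grading-restricted generalized $V$-module ($W_{(n)}=0$ for $\mathrm{Re}\,n$ sufficiently negative) with vertex operator map $Y_W$ and operators $L_W(0)$, $L_W(-1)$, where $L_W(-1)$ raises weights by $1$. $W'=\coprod_nW_{(n)}^*$, $\overline W=\prod_nW_{(n)}$, $\langle\cdot,\cdot\rangle$ the pairing; $e^{zL_W(-1)}$ is a well-defined operator on $\overline W$. $F_n\mathbb C=\{(z_1,\dots,z_n)\in\mathbb C^n:z_i\ne z_j\ (i\ne j)\}$. $\widetilde W_{z_1,\dots,z_n}$ is the space of maps $f:F_n\mathbb C\to\overline W$ such that $\langle w',f(z_1,\dots,z_n)\rangle$ is a rational function with only possible poles at $z_i=z_j$ ($i\ne j$) for every $w'\in W'$. A linear map $\Phi:V^{\otimes n}\to\widetilde W_{z_1,\dots,z_n}$ has the $L(-1)$-derivative property if (i) $\frac{\partial}{\partial z_i}\langle w',\Phi(v_1\otimes\cdots\otimes v_n)(z_1,\dots,z_n)\rangle=\langle w',\Phi(v_1\otimes\cdots\otimes v_{i-1}\otimes L_V(-1)v_i\otimes v_{i+1}\otimes\cdots\otimes v_n)(z_1,\dots,z_n)\rangle$ for all $i$, $v_j\in V$, $w'\in W'$, and (ii) $\big(\sum_{i=1}^n\frac{\partial}{\partial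 z_i}\big)\langle w',\Phi(v_1\otimes\cdots\otimes v_n)(z_1,\dots,z_n)\rangle=\langle w',L_W(-1)\Phi(v_1\otimes\cdots\otimes v_n)(z_1,\dots,z_n)\rangle$. *)

(* Defs.v *)
From Stdlib Require Import Reals ZArith List Arith.
From Stdlib Require Import ClassicalEpsilon.
From Coquelicot Require Import Coquelicot.

Definition is_linear {E F : ModuleSpace C_Ring} (f : E -> F) : Prop :=
  forall (a b : C) (x y : E),
    f (plus (scal a x) (scal b y)) = plus (scal a (f x)) (scal b (f y)).

Definition is_linfun {E : ModuleSpace C_Ring} (f : E -> C) : Prop :=
  forall (a b : C) (x y : E),
    f (plus (scal a x) (scal b y)) = (a * f x + b * f y)%C.

Fixpoint lincomb {E : ModuleSpace C_Ring} (cs : list C) (vs : list E) : E :=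
  match cs, vs with
  | c :: cs', v :: vs' => plus (scal c v) (lincomb cs' vs')
  | _, _ => zero
  end.

Definition fin_dim {E : ModuleSpace C_Ring} (P : E -> Prop) : Prop :=
  exists vs : list E, forall v, P v -> exists cs : list C, v = lincomb cs vs.

Definition lsum {A} {E : AbelianMonoid} (f : A -> E) (l : list A) : E :=
  fold_right (fun a acc => plus (f a) acc) zero (map (fun a => a) l).

(* the (finite) sum of a sequence all of whose terms vanish from some
   index on; this is how infinite sums with finitely many nonzero terms
   (e.g. e^{zL(-1)} acting on \overline W) are evaluated *)
Definition efsum {E : AbelianMonoid} (t : nat -> E) : E :=
  epsilon (inhabits zero)
    (fun x => exists K, (forall k, (K <= k)%nat -> t k = zero) /\ x = sum_n t K).

Definition CZ (k : Z) : C := RtoC (IZR k).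

Fixpoint fallprod (m : Z) (i : nat) : R :=
  match i with
  | O => 1%R
  | S i' => (fallprod m i' * (IZR m - INR i'))%R
  end.
Definition gbinom (m : Z) (i : nat) : C := RtoC (fallprod m i / INR (fact i)).

Definition signN (i : nat) : C := RtoC ((-1) ^ i).
Definition signZ (l : Z) : C := if Z.even l then RtoC 1 else RtoC (-1).

(*   V = coprod_{n in Z} V_(n) is given by the projections projV n      *)
(*   onto V_(n);  YV u k v = u_k v  (Y_V(u,x)v = sum_k u_k v x^{-k-1}). *)

(* L_V(-1)u := coefficient of x in Y_V(u,x)1, i.e. u_{-2} 1 *)
Definition LV1 {V : ModuleSpace C_Ring} (YV : V -> Z -> V -> V) (one : V) (u : V) : V :=
  YV u (-2)%Z one.

Record is_GRVA {V : ModuleSpace C_Ring} (projV : Z -> V -> V)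
    (YV : V -> Z -> V -> V) (one : V) : Prop := {
  va_proj_lin : forall n, is_linear (projV n);
  va_proj_idem : forall n v, projV n (projV n v) = projV n v;
  va_proj_orth : forall m n v, m <> n -> projV m (projV n v) = zero;
  va_proj_decomp : forall v, exists ns : list Z, NoDup ns /\
      (forall m, ~ In m ns -> projV m v = zero) /\ v = lsum (fun n => projV n v) ns;
  va_fin_dim : forall n, fin_dim (fun v => projV n v = v);
  va_lower : exists N : Z, forall n v, (n < N)%Z -> projV n v = zero;
  va_Y_lin_r : forall u k, is_linear (YV u k);
  va_Y_lin_l : forall k v, is_linear (fun u => YV u k v);
  va_Y_trunc : forall u v, exists K : Z, forall k, (K <= k)%Z -> YV u k v = zero;
  va_Y_wt : forall m p k u v, projV m u = u -> projV p v = v ->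
      projV (m + p - k - 1)%Z (YV u k v) = YV u k v;
  va_one_wt : projV 0%Z one = one;
  va_identity : forall k v, YV one k v = if Z.eq_dec k (-1)%Z then v else zero;
  va_creation : forall u k, (0 <= k)%Z -> YV u k one = zero;
  va_creation_lim : forall u, YV u (-1)%Z one = u;
  va_L1_deriv : forall u k v, YV (LV1 YV one u) k v = scal (CZ (- k)) (YV u (k - 1)%Z v);
  va_L1_bracket : forall u k v,
      minus (LV1 YV one (YV u k v)) (YV u k (LV1 YV one v)) = YV (LV1 YV one u) k v;
  (* Jacobi identity, in the form of the Borcherds identity (all sums finite) *)
  va_jacobi : forall u v w (l m n : Z), exists N0 : nat, forall N, (N0 <= N)%nat ->
      sum_n (fun i => scal (gbinom m i)
                 (YV (YV u (l + Z.of_nat i)%Z v) (m + n - Z.of_nat i)%Z w)) N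
    = sum_n (fun i => scal (signN i * gbinom l i)%C
                 (minus (YV u (l + m - Z.of_nat i)%Z (YV v (n + Z.of_nat i)%Z w))
                        (scal (signZ l) (YV v (l + n - Z.of_nat i)%Z (YV u (m + Z.of_nat i)%Z w))))) N
}.

(*   W = coprod_{n in C} W_(n) given by projections projW n;            *)

Record is_GRGModule {V : ModuleSpace C_Ring} (projV : Z -> V -> V)
    (YV : V -> Z -> V -> V) (one : V)
    {W : ModuleSpace C_Ring} (projW : C -> W -> W) (YW : V -> Z -> W -> W)
    (L0W L1W : W -> W) : Prop := {
  md_proj_lin : forall n, is_linear (projW n);
  md_proj_idem : forall n w, projW n (projW n w) = projW n w;
  md_proj_orth : forall m n w, m <> n -> projW m (projW n w) = zero;
  md_proj_decomp : forall w, exists ns : list C, NoDup ns /\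
      (forall m, ~ In m ns -> projW m w = zero) /\ w = lsum (fun n => projW n w) ns;
  md_fin_dim : forall n, fin_dim (fun w => projW n w = w);
  md_lower : exists r : R, forall n w, (Re n < r)%R -> projW n w = zero;
  md_Y_lin_r : forall v k, is_linear (YW v k);
  md_Y_lin_l : forall k w, is_linear (fun v => YW v k w);
  md_Y_trunc : forall v w, exists K : Z, forall k, (K <= k)%Z -> YW v k w = zero;
  md_identity : forall k w, YW one k w = if Z.eq_dec k (-1)%Z then w else zero;
  md_jacobi : forall u v w (l m n : Z), exists N0 : nat, forall N, (N0 <= N)%nat ->
      sum_n (fun i => scal (gbinom m i)
                 (YW (YV u (l + Z.of_nat i)%Z v) (m + n - Z.of_nat i)%Z w)) N
    = sum_n (fun i => scal (signN i * gbinom l i)%C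
                 (minus (YW u (l + m - Z.of_nat i)%Z (YW v (n + Z.of_nat i)%Z w))
                        (scal (signZ l) (YW v (l + n - Z.of_nat i)%Z (YW u (m + Z.of_nat i)%Z w))))) N;
  md_L0_lin : is_linear L0W;
  md_L0_pres : forall n w, projW n w = w -> projW n (L0W w) = L0W w;
  md_L0_geneig : forall n w, projW n w = w ->
      exists K : nat, Nat.iter K (fun x => minus (L0W x) (scal n x)) w = zero;
  md_L0_bracket : forall (m : Z) u k w, projV m u = u ->
      minus (L0W (YW u k w)) (YW u k (L0W w)) = scal (CZ (m - k - 1)) (YW u k w);
  md_L1_lin : is_linear L1W;
  md_L1_wt : forall n w, projW n w = w -> projW (n + 1)%C (L1W w) = L1W w;
  md_L1_deriv : forall u k w, YW (LV1 YV one u) k w = scal (CZ (- k)) (YW u (k - 1)%Z w);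
  md_L1_bracket : forall u k w,
      minus (L1W (YW u k w)) (YW u k (L1W w)) = YW (LV1 YV one u) k w
}.

(* An element of W' = coprod_n W_(n)^*: a linear functional on W that
   vanishes on all W_(m) with m outside a finite set dsupp. *)
Record Wdual {W : ModuleSpace C_Ring} (projW : C -> W -> W) := {
  dfun :> W -> C;
  dsupp : list C;
  dfun_lin : is_linfun dfun;
  dsupp_nodup : NoDup dsupp;
  dsupp_spec : forall m w, ~ In m dsupp -> dfun (projW m w) = 0%C
}.
Arguments dfun {W projW}.
Arguments dsupp {W projW}.

(* \overline W = prod_n W_(n): families f with f n in W_(n) *)
Definition is_Wbar {W : ModuleSpace C_Ring} (projW : C -> W -> W) (f : C -> W) : Prop :=
  forall n, projW n (f n) = f n.

Definition pairing {W : ModuleSpace C_Ring} {projW : C -> W -> W}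
    (w' : Wdual projW) (f : C -> W) : C :=
  lsum (fun n => dfun w' (f n)) (dsupp w').

Definition Lbar {W : ModuleSpace C_Ring} (L1W : W -> W) (f : C -> W) : C -> W :=
  fun m => L1W (f (m - 1)%C).

Definition expLbar {W : ModuleSpace C_Ring} (L1W : W -> W) (z : C) (f : C -> W) : C -> W :=
  fun m => efsum (fun k => scal (Cpow z k / RtoC (INR (fact k)))%C
                               (Nat.iter k L1W (f (m - RtoC (INR k))%C))).

Definition Idx (n : nat) := {i : nat | (i < n)%nat}.

Definition ext {A} {n : nat} (d : A) (f : Idx n -> A) (k : nat) : A :=
  match lt_dec k n with
  | left H => f (exist _ k H)
  | right _ => d
  end.

Definition upd {A} {n : nat} (f : Idx n -> A) (i : Idx n) (a : A) : Idx n -> A :=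
  fun j => if Nat.eq_dec (proj1_sig j) (proj1_sig i) then a else f j.

Definition sumIdx {n : nat} (f : Idx n -> C) : C :=
  fold_right Cplus (RtoC 0) (map (ext (RtoC 0) f) (List.seq 0 n)).

Definition in_Fn {n : nat} (z : Idx n -> C) : Prop :=
  forall i j : Idx n, proj1_sig i <> proj1_sig j -> z i <> z j.

(* polynomials in n variables: lists of (coefficient, exponent vector) *)
Definition mpoly_eval {n : nat} (p : list (C * (Idx n -> nat))) (z : Idx n -> C) : C :=
  fold_right Cplus (RtoC 0)
    (map (fun ce => (fst ce *
        fold_right Cmult (RtoC 1) (map (fun k => Cpow (ext (RtoC 0) z k) (ext 0%nat (snd ce) k))
                                  (List.seq 0 n)))%C) p).

Definition diag_prod {n : nat} (N : nat) (z : Idx n -> C) : C :=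
  fold_right Cmult (RtoC 1)
    (flat_map (fun i => map (fun j => Cpow (ext (RtoC 0) z i - ext (RtoC 0) z j)%C N)
                            (List.seq (S i) (n - S i)))
              (List.seq 0 n)).

Definition rational_diag {n : nat} (g : (Idx n -> C) -> C) : Prop :=
  exists (p : list (C * (Idx n -> nat))) (N : nat),
    forall z, in_Fn z -> g z = (mpoly_eval p z / diag_prod N z)%C.

(* f : F_n C -> \overline W lies in \widetilde W_{z_1,...,z_n}
   (values outside F_n C are irrelevant junk) *)
Definition in_Wtilde {W : ModuleSpace C_Ring} (projW : C -> W -> W) {n : nat}
    (f : (Idx n -> C) -> C -> W) : Prop :=
  (forall z, in_Fn z -> is_Wbar projW (f z)) /\
  (forall w' : Wdual projW, rational_diag (fun z => pairing w' (f z))).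

(* Phi : V^{(x)n} -> \widetilde W, encoded as a multilinear map V^n -> ... *)
Definition multilinear_Phi {V W : ModuleSpace C_Ring} {n : nat}
    (Phi : (Idx n -> V) -> (Idx n -> C) -> C -> W) : Prop :=
  forall (v : Idx n -> V) (i : Idx n) (a b : C) (x y : V) (z : Idx n -> C) (m : C),
    in_Fn z ->
    Phi (upd v i (plus (scal a x) (scal b y))) z m
    = plus (scal a (Phi (upd v i x) z m)) (scal b (Phi (upd v i y) z m)).

Definition L1_derivative_property {V W : ModuleSpace C_Ring}
    (LV : V -> V) (projW : C -> W -> W) (L1W : W -> W) {n : nat}
    (Phi : (Idx n -> V) -> (Idx n -> C) -> C -> W) : Prop :=
  (forall (v : Idx n -> V) (w' : Wdual projW) (z : Idx n -> C) (i : Idx n),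
     in_Fn z ->
     is_derive (K := C_AbsRing) (V := C_NormedModule)
       (fun t => pairing w' (Phi v (upd z i t))) (z i)
       (pairing w' (Phi (upd v i (LV (v i))) z)))
  /\
  (forall (v : Idx n -> V) (w' : Wdual projW) (z : Idx n -> C),
     in_Fn z ->
     forall d : Idx n -> C,
       (forall i, is_derive (K := C_AbsRing) (V := C_NormedModule)
                    (fun t => pairing w' (Phi v (upd z i t))) (z i) (d i)) ->
       sumIdx d = pairing w' (Lbar L1W (Phi v z))).

(* Main.v *)
Require Import Defs.
From Stdlib Require Import Reals ZArith List Arith.
From Coquelicot Require Import Coquelicot.
From Stdlib Require Import Lia Lra FunctionalExtensionality ClassicalEpsilon.

Lemma sum_n_eventual {G : AbelianMonoid} (a : nat -> G) (K : nat) :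
  (forall k, (K < k)%nat -> a k = zero) ->
  forall m, (K <= m)%nat -> sum_n a m = sum_n a K.
Proof.
  intros H m Hm. induction Hm. reflexivity.
  rewrite sum_Sn, H by lia. rewrite plus_zero_r. exact IHHm.
Qed.

Lemma is_series_finite {K : AbsRing} {V : NormedModule K} (a : nat -> V) (N : nat) :
  (forall k, (N < k)%nat -> a k = zero) -> is_series a (sum_n a N).
Proof.
  intros H. unfold is_series.
  apply filterlim_ext_loc with (fun _ => sum_n a N).
  exists N. intros m Hm. symmetry. apply sum_n_eventual; auto.
  apply filterlim_const.
Qed.


Lemma is_series_C_unique (a : nat -> C) (l1 l2 : C) :
  is_series (K := C_AbsRing) (V := C_NormedModule) a l1 ->
  is_series (K := C_AbsRing) (V := C_NormedModule) a l2 -> l1 = l2.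
Proof.
  intros H1 H2. unfold is_series in *.
  exact (@filterlim_locally_unique nat C_AbsRing C_NormedModule eventually
     (Proper_StrongProper _ eventually_filter) (sum_n a) l1 l2 H1 H2).
Qed.

Open Scope R_scope.

Lemma locally_Ca (x : C) (P : C -> Prop) (d : R) :
  0 < d -> (forall y : C, Cmod (y - x)%C < d -> P y) -> locally (T := AbsRing_UniformSpace C_AbsRing) x P.
Proof.
  intros Hd H. exists (mkposreal d Hd). intros y Hy. apply H. exact Hy.
Qed.

Lemma locally_C (x : C) (P : C -> Prop) (d : R) :
  0 < d -> (forall y : C, Cmod (y - x)%C < d -> P y) -> locally (T := C_UniformSpace) x P.
Proof.
  intros Hd H. apply (locally_le_locally_norm (K := C_AbsRing) (V := C_NormedModule) x).
  exists (mkposreal d Hd). intros y Hy. apply H. exact Hy.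
Qed.

Lemma is_derive_Cinv (x : C) : x <> 0%C ->
  is_derive (K := C_AbsRing) (V := C_NormedModule) (fun t => / t)%C x (- / (x * x))%C.
Proof.
  intros Hx. split.
  - apply is_linear_scal_l.
  - intros y Hy. apply (is_filter_lim_locally_unique (K := C_AbsRing) (V := AbsRing_NormedModule C_AbsRing)) in Hy. subst y.
    intros eps.
    assert (Hm : 0 < Cmod x) by (apply Cmod_gt_0; exact Hx).
    apply locally_Ca with (Rmin (Cmod x / 2) (eps * (Cmod x)^3 / 2)).
    { apply Rmin_pos. lra. assert (0 < Cmod x ^3) by (apply pow_lt; lra).
      destruct eps as [e He]; simpl. nra. }
    intros y Hy.
    assert (Hd1 : Cmod (y - x)%C < Cmod x / 2) by (eapply Rlt_le_trans; [exact Hy| apply Rmin_l]).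
    assert (Hd2 : Cmod (y - x)%C < eps * Cmod x ^3 / 2) by (eapply Rlt_le_trans; [exact Hy| apply Rmin_r]).
    assert (Hy1 : Cmod x / 2 <= Cmod y).
    { assert (Cmod x <= Cmod y + Cmod (x - y)%C).
      { replace x with (y + (x - y))%C at 1 by ring. apply Cmod_triangle. }
      replace (x - y)%C with (- (y - x))%C in H by ring. rewrite Cmod_opp in H. lra. }
    assert (Hy0 : y <> 0%C).
    { intro E. subst y. rewrite Cmod_0 in Hy1. lra. }
    change (norm (minus (minus (/ y)%C (/ x)%C) (scal (minus y x) (- / (x * x))%C)))
      with (Cmod (/ y - / x - (y - x) * (- / (x * x)))%C).
    change (norm (minus y x)) with (Cmod (y - x)%C).
    replace (/ y - / x - (y - x) * (- / (x * x)))%C with ((y - x) * (y - x) / (x * x * y))%C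
      by (field; auto).
    unfold Cdiv. rewrite !Cmod_mult, Cmod_inv, !Cmod_mult.
    2:{ repeat apply Cmult_neq_0; auto. }
    assert (0 <= Cmod (y - x)%C) by apply Cmod_ge_0.
    assert (Hpos : 0 < Cmod x * Cmod x * Cmod y) by (apply Rmult_lt_0_compat; [nra | lra]).
    apply Rmult_le_reg_r with (Cmod x * Cmod x * Cmod y). exact Hpos.
    rewrite Rmult_assoc, Rinv_l by lra. rewrite Rmult_1_r.
    assert (Cmod (y - x)%C * (eps * Cmod x ^ 3 / 2) <= eps * Cmod (y - x)%C * (Cmod x * Cmod x * Cmod y)).
    { destruct eps as [e He]; simpl in *. 
      assert (Cmod x * Cmod x * (Cmod x / 2) <= Cmod x * Cmod x * Cmod y).
      { apply Rmult_le_compat_l; nra. }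
      replace (Cmod (y - x)%C * (e * (Cmod x * (Cmod x * (Cmod x * 1))) / 2)) with
        (e * Cmod (y - x)%C * (Cmod x * Cmod x * (Cmod x / 2))) by (simpl; field).
      apply Rmult_le_compat_l; [nra|exact H0]. }
    nra.
Qed.

Open Scope C_scope.

Notation isd f t l := (is_derive (K := C_AbsRing) (V := C_NormedModule) f%C (t : C)%C (l : C)%C).

Lemma isd_conv (f : C -> C) t l : is_derive (K := C_AbsRing) (V := C_NormedModule) f t l ->
  is_derive (K := C_AbsRing) (V := AbsRing_NormedModule C_AbsRing) f t l.
Proof. intros [H1 H2]. split.
 - destruct H1. split; intros; simpl; auto.
 - intros x Hx eps. specialize (H2 x Hx eps).
   eapply filter_imp. 2: exact H2. intros y Hy. simpl in *. exact Hy.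
Qed.

Lemma isd_conv' (f : C -> C) t l :
  is_derive (K := C_AbsRing) (V := AbsRing_NormedModule C_AbsRing) f t l ->
  is_derive (K := C_AbsRing) (V := C_NormedModule) f t l.
Proof. intros [H1 H2]. split.
 - destruct H1. split; intros; simpl; auto.
 - intros x Hx eps. specialize (H2 x Hx eps).
   eapply filter_imp. 2: exact H2. intros y Hy. simpl in *. exact Hy.
Qed.

Lemma isd_plus (f g : C -> C) t df dg : isd f t df -> isd g t dg ->
  isd (fun x => f x + g x) t (df + dg).
Proof. intros. apply (is_derive_plus (K := C_AbsRing) (V := C_NormedModule)); auto. Qed.

Lemma isd_mult (f g : C -> C) t df dg : isd f t df -> isd g t dg ->
  isd (fun x => f x * g x) t (df * g t + f t * dg).
Proof.
  intros H1 H2. apply isd_conv'. exact (is_derive_mult (K := C_AbsRing) f g t df dg (isd_conv _ _ _ H1) (isd_conv _ _ _ H2) Cmult_comm).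
Qed.

Lemma isd_const (c : C) t : isd (fun _ => c) t 0.
Proof. exact (is_derive_const (K := C_AbsRing) (V := C_NormedModule) c t). Qed.

Lemma isd_id t : isd (fun x => x) t 1.
Proof. apply isd_conv'. exact (is_derive_id (K := C_AbsRing) t). Qed.

Lemma isd_ext (f g : C -> C) t l : (forall x, f x = g x) -> isd f t l -> isd g t l.
Proof. intros. apply (is_derive_ext (K := C_AbsRing) (V := C_NormedModule) f); auto. Qed.

Lemma isd_ext_loc (f g : C -> C) t l (d : R) : (0 < d)%R ->
  (forall x, (Cmod (x - t) < d)%R -> f x = g x) -> isd f t l -> isd g t l.
Proof.
  intros Hd H. apply (is_derive_ext_loc (K := C_AbsRing) (V := C_NormedModule) f).
  apply locally_Ca with d; auto.
Qed.

Lemma isd_comp (f g : C -> C) t df dg : isd f (g t) df -> isd g t dg ->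
  isd (fun x => f (g x)) t (dg * df).
Proof. intros H1 H2. exact (is_derive_comp (K := C_AbsRing) (V := C_NormedModule) f g t df dg H1 (isd_conv _ _ _ H2)). Qed.

Lemma isd_unique (f : C -> C) t l1 l2 : isd f t l1 -> isd f t l2 -> l1 = l2.
Proof.
  intros H1 H2. apply is_C_derive_unique in H1. apply is_C_derive_unique in H2. congruence.
Qed.

Lemma isd_eq (f : C -> C) t l1 l2 : isd f t l1 -> l1 = l2 -> isd f t l2.
Proof. intros H E. subst. exact H. Qed.

Lemma isd_inv (f : C -> C) t df : isd f t df -> f t <> 0 ->
  isd (fun x => / f x) t (- df / (f t * f t)).
Proof.
  intros H Hn. apply isd_eq with (df * (- / (f t * f t))).
  apply (isd_comp (fun x => / x) f t). apply is_derive_Cinv. exact Hn. exact H.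
  field. exact Hn.
Qed.

Open Scope C_scope.

Notation iss a l := (is_series (K := C_AbsRing) (V := C_NormedModule) a%C (l : C)%C).

Lemma C_lim_norm (s : nat -> C) (l : C) :
  (forall eps : R, (0 < eps)%R -> exists N, forall n, (N <= n)%nat -> (Cmod (s n - l) < eps)%R) ->
  filterlim s eventually (locally (T := C_UniformSpace) l).
Proof.
  intros H. apply (filterlim_locally_ball_norm (K := C_AbsRing) (U := C_NormedModule)).
  intros [e He]. destruct (H e He) as [N HN]. exists N. intros n Hn. apply HN. exact Hn.
Qed.

Lemma R_lim_norm (s : nat -> R) (l : R) :
  filterlim s eventually (locally l) ->
  forall eps : R, (0 < eps)%R -> exists N, forall n, (N <= n)%nat -> (Rabs (s n - l) < eps)%R.
Proof.
  intros H eps He. apply filterlim_locally with (eps := mkposreal eps He) in H.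
  destruct H as [N HN]. exists N. intros n Hn. apply HN. exact Hn.
Qed.

Lemma C_lim_norm' (s : nat -> C) (l : C) :
  filterlim s eventually (locally (T := C_UniformSpace) l) ->
  forall eps : R, (0 < eps)%R -> exists N, forall n, (N <= n)%nat -> (Cmod (s n - l) < eps)%R.
Proof.
  intros H eps He.
  apply (filterlim_locally_ball_norm (K := C_AbsRing) (U := C_NormedModule)) with (eps := mkposreal eps He) in H.
  destruct H as [N HN]. exists N. intros n Hn. apply HN. exact Hn.
Qed.

Lemma Cmod_le_ReIm (z : C) : (Cmod z <= Rabs (Re z) + Rabs (Im z))%R.
Proof.
  destruct z as [x y]. unfold Cmod, Re, Im; simpl.
  assert (0 <= Rabs x)%R by apply Rabs_pos.
  assert (0 <= Rabs y)%R by apply Rabs_pos.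
  rewrite <- (sqrt_Rsqr (Rabs x + Rabs y)) by lra. apply sqrt_le_1_alt.
  unfold Rsqr. assert (x * x = Rabs x * Rabs x)%R by (rewrite <- Rabs_mult; rewrite Rabs_right; nra). assert (y * y = Rabs y * Rabs y)%R by (rewrite <- Rabs_mult; rewrite Rabs_right; nra). nra.
Qed.

Lemma im_le_Cmod' (z : C) : (Rabs (Im z) <= Cmod z)%R.
Proof.
  destruct z as [x y]. unfold Cmod, Im; simpl.
  rewrite <- sqrt_Rsqr_abs. apply sqrt_le_1_alt. unfold Rsqr. nra.
Qed.

Lemma Re_sum_n (a : nat -> C) n : Re (sum_n a n) = sum_n (fun k => Re (a k)) n.
Proof.
  induction n. rewrite !sum_O. reflexivity.
  rewrite !sum_Sn, <- IHn. destruct (sum_n a n), (a (S n)). reflexivity.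
Qed.

Lemma Im_sum_n (a : nat -> C) n : Im (sum_n a n) = sum_n (fun k => Im (a k)) n.
Proof.
  induction n. rewrite !sum_O. reflexivity.
  rewrite !sum_Sn, <- IHn. destruct (sum_n a n), (a (S n)). reflexivity.
Qed.

Lemma iss_ReIm (a : nat -> C) lr li :
  is_series (fun n => Re (a n)) lr -> is_series (fun n => Im (a n)) li -> iss a (lr, li).
Proof.
  intros H1 H2. unfold is_series. apply C_lim_norm. intros eps He.
  destruct (R_lim_norm _ _ H1 (eps/2) ltac:(lra)) as [N1 HN1].
  destruct (R_lim_norm _ _ H2 (eps/2) ltac:(lra)) as [N2 HN2].
  exists (max N1 N2). intros n Hn.
  specialize (HN1 n ltac:(lia)). specialize (HN2 n ltac:(lia)).
  rewrite <- Re_sum_n in HN1. rewrite <- Im_sum_n in HN2.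
  assert (Hb : (Cmod (sum_n a n - (lr, li)) <= Rabs (Re (sum_n a n) - lr) + Rabs (Im (sum_n a n) - li))%R).
  { pose proof (Cmod_le_ReIm (sum_n a n - (lr, li))) as HH.
    remember (sum_n a n) as S eqn:ES. clear ES. destruct S as [x y]. unfold Re, Im in *. simpl in *. exact HH. }
  change (Cmod (sum_n a n - (lr, li)) < eps)%R. lra.
Qed.
Lemma iss_Re (a : nat -> C) l : iss a l -> is_series (fun n => Re (a n)) (Re l).
Proof.
  intros H. unfold is_series. apply filterlim_locally. intros [e He].
  destruct (C_lim_norm' _ _ H e He) as [N HN]. exists N. intros n Hn.
  specialize (HN n Hn). change (Rabs (sum_n (fun n => Re (a n)) n - Re l) < e)%R.
  rewrite <- Re_sum_n. eapply Rle_lt_trans. 2: exact HN.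
  replace (Re (sum_n a n) - Re l)%R with (Re (sum_n a n - l)) by (destruct (sum_n a n), l; simpl; ring).
  apply re_le_Cmod.
Qed.

Lemma iss_Im (a : nat -> C) l : iss a l -> is_series (fun n => Im (a n)) (Im l).
Proof.
  intros H. unfold is_series. apply filterlim_locally. intros [e He].
  destruct (C_lim_norm' _ _ H e He) as [N HN]. exists N. intros n Hn.
  specialize (HN n Hn). change (Rabs (sum_n (fun n => Im (a n)) n - Im l) < e)%R.
  rewrite <- Im_sum_n. eapply Rle_lt_trans. 2: exact HN.
  replace (Im (sum_n a n) - Im l)%R with (Im (sum_n a n - l)) by (destruct (sum_n a n), l; simpl; ring).
  apply im_le_Cmod'.
Qed.

Definition cprod (a b : nat -> C) (n : nat) : C := sum_n (fun k => a k * b (n - k)%nat) n.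

Lemma sum_n_R_minus (f g : nat -> R) n : sum_n (fun k => f k - g k)%R n = (sum_n f n - sum_n g n)%R.
Proof. induction n. rewrite !sum_O. reflexivity. rewrite !sum_Sn, IHn. unfold plus; simpl; ring. Qed.

Lemma sum_n_R_plus (f g : nat -> R) n : sum_n (fun k => f k + g k)%R n = (sum_n f n + sum_n g n)%R.
Proof. induction n. rewrite !sum_O. reflexivity. rewrite !sum_Sn, IHn. unfold plus; simpl; ring. Qed.

Lemma Cmod_sum_n (a : nat -> C) n : (Cmod (sum_n a n) <= sum_n (fun k => Cmod (a k)) n)%R.
Proof.
  induction n. rewrite !sum_O. lra.
  rewrite !sum_Sn. change (Cmod (sum_n a n + a (S n)) <= sum_n (fun k => Cmod (a k)) n + Cmod (a (S n)))%R. eapply Rle_trans. apply Cmod_triangle. lra.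
Qed.

Lemma iss_val (a : nat -> C) l1 l2 : iss a l1 -> l1 = l2 -> iss a l2.
Proof. intros H E; subst; exact H. Qed.

Lemma ex_series_Rabs_of_Cmod (a : nat -> C) (f : C -> R) :
  (forall z, Rabs (f z) <= Cmod z)%R -> ex_series (fun n => Cmod (a n)) ->
  ex_series (fun n => Rabs (f (a n))).
Proof.
  intros Hf H. apply (ex_series_le (K := R_AbsRing) (V := R_CompleteNormedModule)) with (fun n => Cmod (a n)); auto.
  intros n. change (norm (Rabs (f (a n)))) with (Rabs (Rabs (f (a n)))). rewrite Rabs_Rabsolu. apply Hf.
Qed.

Lemma re_le_Cmod' (z : C) : (Rabs (Re z) <= Cmod z)%R.
Proof. apply re_le_Cmod. Qed.

Lemma iss_cauchy (a b : nat -> C) la lb :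
  iss a la -> iss b lb -> ex_series (fun n => Cmod (a n)) -> ex_series (fun n => Cmod (b n)) ->
  iss (cprod a b) (la * lb) /\ ex_series (fun n => Cmod (cprod a b n)).
Proof.
  intros Ha Hb Aa Ab.
  pose proof (iss_Re _ _ Ha) as Har. pose proof (iss_Im _ _ Ha) as Hai.
  pose proof (iss_Re _ _ Hb) as Hbr. pose proof (iss_Im _ _ Hb) as Hbi.
  pose proof (ex_series_Rabs_of_Cmod a Re re_le_Cmod' Aa) as Aar.
  pose proof (ex_series_Rabs_of_Cmod a Im im_le_Cmod' Aa) as Aai.
  pose proof (ex_series_Rabs_of_Cmod b Re re_le_Cmod' Ab) as Abr.
  pose proof (ex_series_Rabs_of_Cmod b Im im_le_Cmod' Ab) as Abi.
  pose proof (is_series_mult _ _ _ _ Har Hbr Aar Abr) as P1.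
  pose proof (is_series_mult _ _ _ _ Hai Hbi Aai Abi) as P2.
  pose proof (is_series_mult _ _ _ _ Har Hbi Aar Abi) as P3.
  pose proof (is_series_mult _ _ _ _ Hai Hbr Aai Abr) as P4.
  split.
  - apply iss_val with (Re la * Re lb - Im la * Im lb, Re la * Im lb + Im la * Re lb)%R.
    2:{ destruct la, lb; unfold Re, Im; simpl. reflexivity. }
    apply iss_ReIm.
    + pose proof (is_series_minus _ _ _ _ P1 P2) as P. eapply is_series_ext. 2: exact P.
      intros n. unfold cprod. rewrite Re_sum_n, <- !sum_n_Reals.
      transitivity (sum_n (fun k => Re (a k) * Re (b (n-k)%nat)) n - sum_n (fun k => Im (a k) * Im (b (n-k)%nat)) n)%R.
      reflexivity.
      rewrite <- sum_n_R_minus. apply sum_n_ext. intros k. destruct (a k), (b (n - k)%nat). unfold Re, Im; simpl. ring.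
    + pose proof (is_series_plus _ _ _ _ P3 P4) as P. eapply is_series_ext. 2: exact P.
      intros n. unfold cprod. rewrite Im_sum_n, <- !sum_n_Reals.
      transitivity (sum_n (fun k => Re (a k) * Im (b (n-k)%nat)) n + sum_n (fun k => Im (a k) * Re (b (n-k)%nat)) n)%R.
      reflexivity.
      rewrite <- sum_n_R_plus. apply sum_n_ext. intros k. destruct (a k), (b (n - k)%nat). unfold Re, Im; simpl. ring.
  - destruct Aa as [sa Hsa]. destruct Ab as [sb Hsb].
    assert (A1 : ex_series (fun n => Rabs (Cmod (a n)))).
    { exists sa. eapply is_series_ext. 2: exact Hsa. intros n. rewrite Rabs_right; auto. apply Rle_ge, Cmod_ge_0. }
    assert (A2 : ex_series (fun n => Rabs (Cmod (b n)))).
    { exists sb. eapply is_series_ext. 2: exact Hsb. intros n. rewrite Rabs_right; auto. apply Rle_ge, Cmod_ge_0. }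
    pose proof (is_series_mult _ _ _ _ Hsa Hsb A1 A2) as P5.
    apply (ex_series_le (K := R_AbsRing) (V := R_CompleteNormedModule)) with
      (fun n => sum_f_R0 (fun k => Cmod (a k) * Cmod (b (n - k)%nat))%R n).
    2:{ eexists; exact P5. }
    intros n. change (norm (Cmod (cprod a b n))) with (Rabs (Cmod (cprod a b n))).
    rewrite Rabs_right by (apply Rle_ge, Cmod_ge_0).
    rewrite <- sum_n_Reals. unfold cprod. eapply Rle_trans. apply Cmod_sum_n.
    apply Req_le. apply sum_n_ext. intros k. apply Cmod_mult.
Qed.

Open Scope C_scope.

Ltac cnorm := cbv beta; repeat match goal with
  | |- context [@plus ?G ?x ?y] => change (@plus G x y) with (Cplus x y)
  | |- context [@opp ?G ?x] => change (@opp G x) with (Copp x)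
  | |- context [@mult ?G ?x ?y] => change (@mult G x y) with (Cmult x y)
  end.
Ltac cring := cnorm; match goal with |- @eq _ ?x ?y => change (@eq C x y) end; ring.

Lemma csum_S (g : nat -> C) n : sum_n g (S n) = sum_n g n + g (S n).
Proof. rewrite sum_Sn. reflexivity. Qed.
Lemma csum_0 (g : nat -> C) : sum_n g 0 = g 0%nat.
Proof. apply sum_O. Qed.
Lemma csum_shift (g : nat -> C) k : sum_n g (S k) = g 0%nat + sum_n (fun j => g (S j)) k.
Proof.
  induction k. rewrite csum_S, !csum_0. reflexivity.
  rewrite csum_S, IHk, csum_S. cring.
Qed.
Lemma csum_plus (f g : nat -> C) n : sum_n (fun k => f k + g k) n = sum_n f n + sum_n g n.
Proof. induction n. rewrite !csum_0. reflexivity. rewrite !csum_S, IHn. cring. Qed.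
Lemma csum_mult_l (c : C) (f : nat -> C) n : sum_n (fun k => c * f k) n = c * sum_n f n.
Proof. induction n. rewrite !csum_0. reflexivity. rewrite !csum_S, IHn. cring. Qed.
Lemma csum_ext (f g : nat -> C) n : (forall k, (k <= n)%nat -> f k = g k) -> sum_n f n = sum_n g n.
Proof. intros H. apply sum_n_ext_loc. exact H. Qed.

Lemma iss_fin (a : nat -> C) N : (forall k, (N < k)%nat -> a k = 0) -> iss a (sum_n a N).
Proof. intros H. apply (is_series_finite (K := C_AbsRing) (V := C_NormedModule)). exact H. Qed.

Lemma exs_fin (a : nat -> R) N : (forall k, (N < k)%nat -> a k = 0%R) -> ex_series a.
Proof. intros H. exists (sum_n a N). apply (is_series_finite (K := R_AbsRing) (V := R_NormedModule)). exact H. Qed.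

Definition Good (rho : R) (f : C -> C) : Prop :=
  exists c : nat -> C -> C,
    (forall t, (Cmod t < rho)%R -> c 0%nat t = f t) /\
    (forall k t, (Cmod t < rho)%R -> isd (c k) t (RtoC (INR (S k)) * c (S k) t)) /\
    (forall t, (Cmod t < rho)%R ->
       ex_series (fun k => Cmod (c k 0 * t ^ k)) /\ iss (fun k => c k 0 * t ^ k) (f t)).

Lemma Good_ext rho (f g : C -> C) : (forall t, (Cmod t < rho)%R -> f t = g t) -> Good rho f -> Good rho g.
Proof.
  intros E [c [H0 [H1 H2]]]. exists c. split; [|split]; auto.
  - intros t Ht. rewrite <- E; auto.
  - intros t Ht. destruct (H2 t Ht) as [A B]. split; auto. rewrite <- E; auto.
Qed.

Lemma Good_const rho (a : C) : Good rho (fun _ => a).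
Proof.
  exists (fun k _ => match k with O => a | _ => 0 end). split; [|split].
  - reflexivity.
  - intros k t _. apply isd_eq with (RtoC 0). apply isd_const. destruct k; simpl; ring.
  - intros t _. split.
    + apply exs_fin with 0%nat. intros k Hk. destruct k. lia. simpl. rewrite Cmult_0_l. apply Cmod_0.
    + apply iss_val with (sum_n (fun k => (match k with O => a | _ => 0 end) * t ^ k) 0).
      apply iss_fin. intros k Hk. destruct k. lia. simpl; ring.
      rewrite csum_0. simpl. ring.
Qed.

Lemma Good_shift rho (a : C) : Good rho (fun t => a + t).
Proof.
  exists (fun k t => match k with O => a + t | 1%nat => 1 | _ => 0 end). split; [|split].
  - reflexivity.
  - intros k t _. destruct k as [|[|k]].
    + apply isd_eq with (RtoC 0 + RtoC 1). apply isd_plus. apply isd_const. apply isd_id. simpl. ring.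
    + apply isd_eq with (RtoC 0). apply isd_const. simpl. ring.
    + apply isd_eq with (RtoC 0). apply isd_const. simpl. ring.
  - intros t _. split.
    + apply exs_fin with 1%nat. intros k Hk. destruct k as [|[|k]]; try lia. simpl. rewrite Cmult_0_l. apply Cmod_0.
    + apply iss_val with (sum_n (fun k => (match k with O => a + 0 | 1%nat => 1 | _ => 0 end) * t ^ k) 1).
      apply iss_fin. intros k Hk. destruct k as [|[|k]]; try lia. simpl; ring.
      rewrite csum_S, csum_0. simpl. ring.
Qed.

Lemma Good_plus rho (f g : C -> C) : Good rho f -> Good rho g -> Good rho (fun t => f t + g t).
Proof.
  intros [a [Ha0 [Ha1 Ha2]]] [b [Hb0 [Hb1 Hb2]]].
  exists (fun k t => a k t + b k t). split; [|split].
  - intros t Ht. rewrite Ha0, Hb0; auto.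
  - intros k t Ht. apply isd_eq with (INR (S k) * a (S k) t + INR (S k) * b (S k) t).
    apply isd_plus; auto. ring.
  - intros t Ht. destruct (Ha2 t Ht) as [A1 A2]. destruct (Hb2 t Ht) as [B1 B2]. split.
    + apply (ex_series_le (K := R_AbsRing) (V := R_CompleteNormedModule)) with
        (fun k => Cmod (a k 0 * t ^ k) + Cmod (b k 0 * t ^ k))%R.
      * intros k. change (norm (Cmod ((a k 0 + b k 0) * t ^ k))) with (Rabs (Cmod ((a k 0 + b k 0) * t ^ k))).
        rewrite Rabs_right by (apply Rle_ge, Cmod_ge_0).
        rewrite Cmult_plus_distr_r. apply Cmod_triangle.
      * apply (ex_series_plus (K := R_AbsRing) (V := R_NormedModule)); auto.
    + pose proof (is_series_plus (K := C_AbsRing) (V := C_NormedModule) _ _ _ _ A2 B2) as P.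
      eapply (is_series_ext (K := C_AbsRing) (V := C_NormedModule)). 2: exact P.
      intros k. cring.
Qed.

Open Scope C_scope.

Lemma isd_sum_n (g : nat -> C -> C) (dg : nat -> C) k t :
  (forall j, (j <= k)%nat -> isd (g j) t (dg j)) ->
  isd (fun x => sum_n (fun j => g j x) k) t (sum_n dg k).
Proof.
  intros H. induction k.
  - rewrite csum_0. eapply isd_ext. 2: apply H; lia. intros x. rewrite csum_0. reflexivity.
  - rewrite csum_S. eapply isd_ext. 2: apply isd_plus; [apply IHk; intros; apply H; lia | apply H; lia].
    intros x. rewrite csum_S. reflexivity.
Qed.

Lemma leibniz_sum (A B : nat -> C) k :
  sum_n (fun j => RtoC (INR (S j)) * A (S j) * B (k - j)%nat + A j * (RtoC (INR (S (k - j))) * B (S (k - j)))) k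
  = RtoC (INR (S k)) * sum_n (fun j => A j * B (S k - j)%nat) (S k).
Proof.
  set (X := fun j => RtoC (INR j) * A j * B (S k - j)%nat).
  set (Y := fun j => RtoC (INR (S k - j)) * A j * B (S k - j)%nat).
  rewrite csum_plus.
  assert (E1 : sum_n (fun j => RtoC (INR (S j)) * A (S j) * B (k - j)%nat) k = sum_n X (S k)).
  { rewrite csum_shift. unfold X at 1. simpl (INR 0). rewrite Cmult_0_l, Cmult_0_l, Cplus_0_l.
    apply csum_ext. intros j Hj. unfold X. reflexivity. }
  assert (E2 : sum_n (fun j => A j * (RtoC (INR (S (k - j))) * B (S (k - j)))) k = sum_n Y (S k)).
  { rewrite csum_S. unfold Y at 2. rewrite Nat.sub_diag. simpl (INR 0). rewrite Cmult_0_l, Cmult_0_l, Cplus_0_r.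
    apply csum_ext. intros j Hj. unfold Y. replace (S (k - j)) with (S k - j)%nat by lia. cring. }
  rewrite E1, E2, <- csum_plus, <- csum_mult_l. apply csum_ext. intros j Hj. unfold X, Y.
  rewrite minus_INR by lia. rewrite RtoC_minus. cring.
Qed.

Lemma Good_mult rho (f g : C -> C) : Good rho f -> Good rho g -> Good rho (fun t => f t * g t).
Proof.
  intros [a [Ha0 [Ha1 Ha2]]] [b [Hb0 [Hb1 Hb2]]].
  exists (fun k t => sum_n (fun j => a j t * b (k - j)%nat t) k). split; [|split].
  - intros t Ht. rewrite csum_0. simpl. rewrite Ha0, Hb0; auto.
  - intros k t Ht.
    apply isd_eq with (sum_n (fun j => RtoC (INR (S j)) * a (S j) t * b (k - j)%nat t
         + a j t * (RtoC (INR (S (k - j))) * b (S (k - j)) t)) k).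
    + apply isd_sum_n. intros j Hj.
      apply isd_eq with ((RtoC (INR (S j)) * a (S j) t) * b (k - j)%nat t + a j t * (RtoC (INR (S (k - j))) * b (S (k - j)) t)).
      apply isd_mult; auto. reflexivity.
    + apply (leibniz_sum (fun j => a j t) (fun j => b j t)).
  - intros t Ht. destruct (Ha2 t Ht) as [A1 A2]. destruct (Hb2 t Ht) as [B1 B2].
    destruct (iss_cauchy _ _ _ _ A2 B2 A1 B1) as [P1 P2].
    assert (E : forall k, sum_n (fun j => a j 0 * b (k - j)%nat 0) k * t ^ k
                  = cprod (fun j => a j 0 * t ^ j) (fun j => b j 0 * t ^ j) k).
    { intros k. unfold cprod. rewrite Cmult_comm, <- csum_mult_l. apply csum_ext. intros j Hj.
      replace (t ^ k) with (t ^ j * t ^ (k - j)%nat).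
      cring. rewrite <- Cpow_add_r. f_equal. lia. }
    split.
    + eapply ex_series_ext. 2: exact P2. intros k. rewrite E. reflexivity.
    + eapply (is_series_ext (K := C_AbsRing) (V := C_NormedModule)). 2: exact P1.
      intros k. rewrite E. reflexivity.
Qed.

Open Scope C_scope.

Lemma geom_partial (q : C) n : q <> 1 -> sum_n (fun k => q ^ k) n = (1 - q ^ (S n)) / (1 - q).
Proof.
  intros Hq. assert (1 - q <> 0). { intro E. apply Hq. 
    replace q with (1 - (1 - q)) by ring. rewrite E. ring. }
  induction n.
  - rewrite csum_0. simpl. field. auto.
  - rewrite csum_S, IHn. simpl. field. auto.
Qed.

Lemma iss_geom (q : C) : (Cmod q < 1)%R ->
  iss (fun k => q ^ k) (/ (1 - q)) /\ ex_series (fun k => Cmod (q ^ k)).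
Proof.
  intros Hq. assert (Hq1 : q <> 1). { intro E; subst. rewrite Cmod_1 in Hq. lra. }
  assert (H1 : 1 - q <> 0). { intro E. apply Hq1.
    replace q with (1 - (1 - q)) by ring. rewrite E. ring. }
  assert (Hm : (0 < Cmod (1 - q))%R) by (apply Cmod_gt_0; auto).
  split.
  - unfold is_series. apply C_lim_norm. intros eps He.
    assert (Hq' : (Rabs (Cmod q) < 1)%R) by (rewrite Rabs_right; [lra| apply Rle_ge, Cmod_ge_0]).
    destruct (pow_lt_1_zero _ Hq' (eps * Cmod (1 - q))%R ltac:(nra)) as [N HN].
    exists N. intros n Hn. rewrite geom_partial by auto.
    replace ((1 - q ^ S n) / (1 - q) - / (1 - q)) with (- (q ^ S n) / (1 - q)) by (field; auto).
    unfold Cdiv. rewrite Cmod_mult, Cmod_inv, Cmod_opp, Cmod_pow by auto.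
    specialize (HN (S n) ltac:(lia)). rewrite Rabs_right in HN.
    2:{ apply Rle_ge, pow_le, Cmod_ge_0. }
    apply Rmult_lt_reg_r with (Cmod (1 - q)). auto.
    rewrite Rmult_assoc, Rinv_l by lra. lra.
  - exists (/ (1 - Cmod q))%R. eapply is_series_ext. 2: apply is_series_geom.
    intros k. rewrite Cmod_pow. reflexivity.
    rewrite Rabs_right; [lra| apply Rle_ge, Cmod_ge_0].
Qed.

Lemma isd_invpow (c : C) m t : c + t <> 0 ->
  isd (fun x => (/ (c + x)) ^ m) t (- RtoC (INR m) * (/ (c + t)) ^ (S m)).
Proof.
  intros Hn. induction m.
  - apply isd_eq with (RtoC 0). eapply isd_ext. 2: apply (isd_const 1). intros; reflexivity.
    simpl. ring.
  - assert (Hu : isd (fun x => / (c + x)) t (- (RtoC 0 + RtoC 1) / ((c + t) * (c + t)))).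
    { apply (isd_inv (fun x => c + x)). apply isd_plus. apply isd_const. apply isd_id. exact Hn. }
    eapply isd_ext. intros x. symmetry. apply Cpow_S.
    eapply isd_eq. apply isd_mult. exact Hu. exact IHm.
    rewrite S_INR, RtoC_plus. simpl. field. exact Hn.
Qed.

Lemma Good_inv rho (c : C) : (rho <= Cmod c)%R -> Good rho (fun t => / (c + t)).
Proof.
  intros Hc.
  assert (Hnz : forall t, (Cmod t < rho)%R -> c + t <> 0).
  { intros t Ht E. assert (t = - c) by (replace t with (c + t - c) by ring; rewrite E; ring).
    subst. rewrite Cmod_opp in Ht. lra. }
  exists (fun k t => (RtoC (-1)) ^ k * (/ (c + t)) ^ (S k)). split; [|split].
  - intros t Ht. simpl. ring.
  - intros k t Ht. eapply isd_eq.
    + eapply isd_ext. 2: apply isd_mult. 2: apply isd_const. 2: apply (isd_invpow c (S k) t (Hnz t Ht)).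
      intros; reflexivity.
    + rewrite !Cpow_S. ring.
  - intros t Ht.
    assert (Hc0 : c <> 0).
    { intro E. subst. rewrite Cmod_0 in Hc. pose proof (Cmod_ge_0 t). lra. }
    assert (Hq : (Cmod (- t / c) < 1)%R).
    { unfold Cdiv. rewrite Cmod_mult, Cmod_opp, Cmod_inv by auto.
      assert (0 < Cmod c)%R by (apply Cmod_gt_0; auto).
      apply Rmult_lt_reg_r with (Cmod c). auto. rewrite Rmult_assoc, Rinv_l by lra. lra. }
    destruct (iss_geom _ Hq) as [G1 G2].
    assert (E : forall k, (RtoC (-1)) ^ k * (/ (c + 0)) ^ (S k) * t ^ k = / c * (- t / c) ^ k).
    { intros k. rewrite Cplus_0_r. simpl.
      replace (- t / c) with (RtoC (-1) * / c * t) by (field; auto).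
      rewrite !Cpow_mult_l. ring. }
    split.
    + apply ex_series_ext with (fun k => Cmod (/ c) * Cmod ((- t / c) ^ k))%R.
      intros k. rewrite E, Cmod_mult. reflexivity.
      apply (ex_series_scal_l (K := R_AbsRing) (V := R_NormedModule)). exact G2.
    + eapply (is_series_ext (K := C_AbsRing) (V := C_NormedModule)).
      intros k. symmetry. apply E.
      apply iss_val with (/ c * / (1 - - t / c)).
      apply (is_series_scal_l (K := C_AbsRing) (V := C_NormedModule)). exact G1.
      field. split; auto.
Qed.

Open Scope C_scope.

Lemma INR_fact_nz k : RtoC (INR (fact k)) <> 0.
Proof. intro E. apply RtoC_inj in E. apply (INR_fact_neq_0 k). exact E. Qed.

Lemma Good_derivs rho (f : C -> C) (H : nat -> C -> C) :
  Good rho f -> (forall t, (Cmod t < rho)%R -> H 0%nat t = f t) ->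
  (forall k t, (Cmod t < rho)%R -> isd (H k) t (H (S k) t)) ->
  forall t, (Cmod t < rho)%R ->
    ex_series (fun k => Cmod (/ RtoC (INR (fact k)) * H k 0 * t ^ k)) /\
    iss (fun k => / RtoC (INR (fact k)) * H k 0 * t ^ k) (f t).
Proof.
  intros [c [Hc0 [Hc1 Hc2]]] H0 H1.
  assert (Hid : forall k t, (Cmod t < rho)%R -> H k t = RtoC (INR (fact k)) * c k t).
  { induction k; intros t Ht.
    - simpl. rewrite H0, Hc0 by auto. ring.
    - assert (D1 : isd (H k) t (RtoC (INR (fact k)) * (RtoC (INR (S k)) * c (S k) t))).
      { apply isd_ext_loc with (fun x => RtoC (INR (fact k)) * c k x) (rho - Cmod t)%R.
        lra. intros x Hx. symmetry. apply IHk.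
        replace x with (t + (x - t)) by ring. eapply Rle_lt_trans. apply Cmod_triangle. lra.
        apply isd_eq with (0 * c k t + RtoC (INR (fact k)) * (RtoC (INR (S k)) * c (S k) t)).
        apply isd_mult. apply isd_const. apply Hc1; auto. ring. }
      pose proof (isd_unique _ _ _ _ (H1 k t Ht) D1) as U. rewrite U.
      rewrite fact_simpl, mult_INR, RtoC_mult. ring. }
  intros t Ht.
  assert (H00 : (Cmod 0 < rho)%R) by (rewrite Cmod_0; pose proof (Cmod_ge_0 t); lra).
  assert (E : forall k, / RtoC (INR (fact k)) * H k 0 * t ^ k = c k 0 * t ^ k).
  { intros k. rewrite Hid by auto. field. apply INR_fact_nz. }
  destruct (Hc2 t Ht) as [A B]. split.
  - eapply ex_series_ext. 2: exact A. intros k. rewrite E. reflexivity.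
  - eapply (is_series_ext (K := C_AbsRing) (V := C_NormedModule)). 2: exact B. intros k. rewrite E. reflexivity.
Qed.

Open Scope C_scope.

Lemma Idx_eq {n} (i j : Idx n) : proj1_sig i = proj1_sig j -> i = j.
Proof.
  destruct i as [i Hi], j as [j Hj]. simpl. intros E. subst. f_equal. apply Peano_dec.le_unique.
Qed.

Lemma upd_eq {A n} (f : Idx n -> A) i a : upd f i a i = a.
Proof. unfold upd. destruct Nat.eq_dec; congruence. Qed.

Lemma upd_neq {A n} (f : Idx n -> A) i a j : proj1_sig j <> proj1_sig i -> upd f i a j = f j.
Proof. unfold upd. destruct Nat.eq_dec; congruence. Qed.

Lemma upd_same {A n} (f : Idx n -> A) i : upd f i (f i) = f.
Proof.
  apply functional_extensionality. intros j. unfold upd. destruct Nat.eq_dec; auto.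
  f_equal. apply Idx_eq. auto.
Qed.

Lemma upd_upd {A n} (f : Idx n -> A) i a b : upd (upd f i a) i b = upd f i b.
Proof.
  apply functional_extensionality. intros j. unfold upd. destruct Nat.eq_dec; auto.
Qed.

Lemma ext_in {A n} (d : A) (f : Idx n -> A) k (H : (k < n)%nat) : ext d f k = f (exist _ k H).
Proof.
  unfold ext. destruct lt_dec. f_equal. apply Idx_eq. reflexivity. lia.
Qed.

Lemma ext_out {A n} (d : A) (f : Idx n -> A) k : (n <= k)%nat -> ext d f k = d.
Proof. intros H. unfold ext. destruct lt_dec. lia. reflexivity. Qed.

Lemma Cinv0 : / (RtoC 0) = RtoC 0.
Proof. unfold Cinv, RtoC. simpl. apply injective_projections; simpl; unfold Rdiv; ring. Qed.

Lemma Cinv_mult_gen (x y : C) : / (x * y) = / x * / y.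
Proof.
  destruct (Ceq_dec x 0) as [Ex|Ex]; [subst|].
  { rewrite Cmult_0_l. rewrite Cinv0. ring. }
  destruct (Ceq_dec y 0) as [Ey|Ey]; [subst|].
  { rewrite Cmult_0_r. rewrite Cinv0. ring. }
  field. split; auto.
Qed.

Lemma Good_fold_plus rho {A} (l : list A) (F : A -> C -> C) :
  (forall a, In a l -> Good rho (F a)) -> Good rho (fun t => fold_right Cplus 0 (map (fun a => F a t) l)).
Proof.
  induction l; intros H; simpl.
  - apply Good_const.
  - apply (Good_plus rho (F a) (fun t => fold_right Cplus 0 (map (fun a => F a t) l))).
    apply H; simpl; auto. apply IHl. intros; apply H; simpl; auto.
Qed.

Lemma Good_fold_mult rho {A} (l : list A) (F : A -> C -> C) :
  (forall a, In a l -> Good rho (F a)) -> Good rho (fun t => fold_right Cmult 1 (map (fun a => F a t) l)).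
Proof.
  induction l; intros H; simpl.
  - apply Good_const.
  - apply (Good_mult rho (F a) (fun t => fold_right Cmult 1 (map (fun a => F a t) l))).
    apply H; simpl; auto. apply IHl. intros; apply H; simpl; auto.
Qed.

Lemma Good_pow rho (f : C -> C) m : Good rho f -> Good rho (fun t => f t ^ m).
Proof.
  intros H. induction m; simpl.
  - apply Good_const.
  - apply (Good_mult rho f (fun t => f t ^ m)); auto.
Qed.

Lemma fold_mult_app (l1 l2 : list C) :
  fold_right Cmult 1 (l1 ++ l2) = fold_right Cmult 1 l1 * fold_right Cmult 1 l2.
Proof. induction l1; simpl. ring. rewrite IHl1. ring. Qed.

Lemma Good_flat rho {A B} (l : list A) (h : A -> list B) (F : A -> B -> C -> C) :
  (forall a b, In a l -> In b (h a) -> Good rho (F a b)) ->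
  Good rho (fun t => fold_right Cmult 1 (flat_map (fun a => map (fun b => F a b t) (h a)) l)).
Proof.
  induction l; intros H; simpl.
  - apply Good_const.
  - eapply Good_ext. intros t _. symmetry. apply fold_mult_app.
    apply (Good_mult rho (fun t => fold_right Cmult 1 (map (fun b => F a b t) (h a)))
        (fun t => fold_right Cmult 1 (flat_map (fun a => map (fun b => F a b t) (h a)) l))).
    + apply Good_fold_mult. intros b Hb. apply H; simpl; auto.
    + apply IHl. intros; apply H; simpl; auto.
Qed.

Lemma Cinv1 : / (RtoC 1) = RtoC 1.
Proof. field. Qed.

Lemma Cinv_fold_mult (l : list C) : / fold_right Cmult 1 l = fold_right Cmult 1 (map Cinv l).
Proof. induction l; simpl. apply Cinv1. rewrite Cinv_mult_gen, IHl. reflexivity. Qed.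

Lemma Cinv_pow_gen (x : C) m : / (x ^ m) = (/ x) ^ m.
Proof. induction m; simpl. apply Cinv1. rewrite Cinv_mult_gen, IHm. reflexivity. Qed.

Lemma map_flat_map' {A B D} (g : B -> D) (f : A -> list B) (l : list A) :
  map g (flat_map f l) = flat_map (fun a => map g (f a)) l.
Proof. induction l; simpl; auto. rewrite map_app, IHl. reflexivity. Qed.

Lemma Good_mpoly rho {n} (w : C -> Idx n -> C) (p : list (C * (Idx n -> nat))) :
  (forall k, Good rho (fun t => ext (RtoC 0) (w t) k)) -> Good rho (fun t => mpoly_eval p (w t)).
Proof.
  intros Hk. unfold mpoly_eval.
  apply (Good_fold_plus rho p (fun ce t => fst ce * fold_right Cmult 1
        (map (fun k => Cpow (ext (RtoC 0) (w t) k) (ext 0%nat (snd ce) k)) (seq 0 n)))).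
  intros ce _.
  apply (Good_mult rho (fun _ => fst ce)). apply Good_const.
  apply (Good_fold_mult rho (seq 0 n) (fun k t => Cpow (ext (RtoC 0) (w t) k) (ext 0%nat (snd ce) k))).
  intros k _. apply (Good_pow rho (fun t => ext (RtoC 0) (w t) k)). apply Hk.
Qed.

Lemma Good_invdiag rho {n} (w : C -> Idx n -> C) (N : nat) :
  (forall a b, (a < b < n)%nat ->
     (exists c, forall t, ext (RtoC 0) (w t) a - ext (RtoC 0) (w t) b = c) \/
     (exists c, (rho <= Cmod c)%R /\ forall t, ext (RtoC 0) (w t) a - ext (RtoC 0) (w t) b = c + t) \/
     (exists c, (rho <= Cmod c)%R /\ forall t, ext (RtoC 0) (w t) a - ext (RtoC 0) (w t) b = - (c + t))) ->
  Good rho (fun t => / diag_prod N (w t)).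
Proof.
  intros HD. unfold diag_prod.
  apply (Good_ext rho (fun t => fold_right Cmult 1 (flat_map (fun a => map (fun b =>
     (/ (ext (RtoC 0) (w t) a - ext (RtoC 0) (w t) b)) ^ N) (seq (S a) (n - S a))) (seq 0 n)))).
  intros t _.
  symmetry. rewrite Cinv_fold_mult, map_flat_map'.
  f_equal. apply flat_map_ext. intros a. rewrite map_map. apply map_ext. intros b.
  apply Cinv_pow_gen.
  apply (Good_flat rho (seq 0 n) (fun a => seq (S a) (n - S a))
     (fun a b t => (/ (ext (RtoC 0) (w t) a - ext (RtoC 0) (w t) b)) ^ N)).
  intros a b Ha Hb. apply in_seq in Ha. apply in_seq in Hb.
  apply (Good_pow rho (fun t => / (ext (RtoC 0) (w t) a - ext (RtoC 0) (w t) b))).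
  destruct (HD a b ltac:(lia)) as [[c Hc]|[[c [Hc1 Hc]]|[c [Hc1 Hc]]]].
  - apply (Good_ext rho (fun _ => / c)). intros t _. rewrite Hc. reflexivity. apply Good_const.
  - apply (Good_ext rho (fun t => / (c + t))). intros t _. rewrite Hc. reflexivity. apply Good_inv. exact Hc1.
  - apply (Good_ext rho (fun t => / RtoC (-1) * / (c + t))). intros t _. rewrite Hc.
    replace (- (c + t)) with (RtoC (-1) * (c + t)) by ring. rewrite Cinv_mult_gen. reflexivity.
    apply (Good_mult rho (fun _ => / RtoC (-1))). apply Good_const. apply Good_inv. exact Hc1.
Qed.

Open Scope C_scope.

Lemma sumIdx_eq {n} (f : Idx n -> C) :
  sumIdx f = fold_right Cplus 0 (map (ext (RtoC 0) f) (seq 0 n)).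
Proof. reflexivity. Qed.

Lemma fold_plus_map2 (a b : nat -> C) l :
  fold_right Cplus 0 (map (fun k => a k + b k) l) = fold_right Cplus 0 (map a l) + fold_right Cplus 0 (map b l).
Proof. induction l; simpl. ring. rewrite IHl. ring. Qed.

Lemma fold_plus_scal (c : C) (a : nat -> C) l :
  fold_right Cplus 0 (map (fun k => c * a k) l) = c * fold_right Cplus 0 (map a l).
Proof. induction l; simpl. ring. rewrite IHl. ring. Qed.

Lemma sumIdx_plus {n} (f g : Idx n -> C) : sumIdx (fun i => f i + g i) = sumIdx f + sumIdx g.
Proof.
  rewrite !sumIdx_eq, <- fold_plus_map2. f_equal. apply map_ext_in. intros k Hk.
  apply in_seq in Hk. assert (Hk2 : (k < n)%nat) by lia; rewrite !(ext_in _ _ k Hk2). reflexivity.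
Qed.

Lemma sumIdx_scal {n} (c : C) (f : Idx n -> C) : sumIdx (fun i => c * f i) = c * sumIdx f.
Proof.
  rewrite !sumIdx_eq, <- fold_plus_scal. f_equal. apply map_ext_in. intros k Hk.
  apply in_seq in Hk. assert (Hk2 : (k < n)%nat) by lia; rewrite !(ext_in _ _ k Hk2). reflexivity.
Qed.

Lemma sumIdx_ext {n} (f g : Idx n -> C) : (forall i, f i = g i) -> sumIdx f = sumIdx g.
Proof. intros H. apply functional_extensionality in H. subst. reflexivity. Qed.

Lemma sumIdx_0 {n} : sumIdx (fun _ : Idx n => RtoC 0) = 0.
Proof.
  rewrite sumIdx_eq. induction (seq 0 n) as [|a l IH]; simpl. reflexivity.
  rewrite IH. unfold ext. destruct lt_dec; ring.
Qed.

Lemma fold_ind k a m :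
  fold_right Cplus 0 (map (fun j => if Nat.eq_dec j k then RtoC 1 else RtoC 0) (seq a m))
  = if (Nat.leb a k && Nat.ltb k (a + m))%bool then RtoC 1 else RtoC 0.
Proof.
  revert a. induction m; intros a; simpl.
  - destruct (Nat.leb a k) eqn:E1; destruct (Nat.ltb k (a + 0)) eqn:E2; simpl; auto.
    apply Nat.leb_le in E1. apply Nat.ltb_lt in E2. lia.
  - rewrite IHm. destruct (Nat.eq_dec a k).
    + subst. destruct (Nat.leb (S k) k) eqn:E1. apply Nat.leb_le in E1. lia.
      rewrite Nat.leb_refl. destruct (Nat.ltb k (k + S m)) eqn:E2. simpl. ring.
      apply Nat.ltb_ge in E2. lia.
    + destruct (Nat.leb (S a) k) eqn:E1; destruct (Nat.ltb k (S a + m)) eqn:E2;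
      destruct (Nat.leb a k) eqn:E3; destruct (Nat.ltb k (a + S m)) eqn:E4; simpl; try ring;
      repeat match goal with H : Nat.leb _ _ = true |- _ => apply Nat.leb_le in H
                           | H : Nat.leb _ _ = false |- _ => apply Nat.leb_gt in H
                           | H : Nat.ltb _ _ = true |- _ => apply Nat.ltb_lt in H
                           | H : Nat.ltb _ _ = false |- _ => apply Nat.ltb_ge in H end; lia.
Qed.

Lemma sumIdx_ind {n} k : (k < n)%nat ->
  sumIdx (fun i : Idx n => if Nat.eq_dec (proj1_sig i) k then RtoC 1 else RtoC 0) = 1.
Proof.
  intros Hk. rewrite sumIdx_eq.
  transitivity (fold_right Cplus 0 (map (fun j => if Nat.eq_dec j k then RtoC 1 else RtoC 0) (seq 0 n))).
  - f_equal. apply map_ext_in. intros j Hj. apply in_seq in Hj. assert (Hj2 : (j < n)%nat) by lia; rewrite (ext_in _ _ j Hj2). reflexivity.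
  - rewrite fold_ind. destruct (Nat.leb 0 k) eqn:E1; destruct (Nat.ltb k (0 + n)) eqn:E2; simpl; auto.
    all: try (apply Nat.ltb_ge in E2; lia); try (apply Nat.leb_gt in E1; lia).
Qed.

Open Scope C_scope.

Definition MGood {n} (G : (Idx n -> C) -> C) : Prop :=
  exists dG : Idx n -> (Idx n -> C) -> C,
    forall w, (forall i, isd (fun s => G (upd w i s)) (w i) (dG i w)) /\
              isd (fun t => G (fun j => w j + t)) 0 (sumIdx (fun i => dG i w)).

Lemma shift0 {n} (w : Idx n -> C) : (fun j => w j + 0) = w.
Proof. apply functional_extensionality. intros; ring. Qed.

Lemma MGood_ext {n} (G G' : (Idx n -> C) -> C) : (forall w, G w = G' w) -> MGood G -> MGood G'.
Proof.
  intros E [dG H]. exists dG. intros w. destruct (H w) as [H1 H2]. split.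
  - intros i. eapply isd_ext. 2: apply H1. intros; apply E.
  - eapply isd_ext. 2: apply H2. intros; apply E.
Qed.

Lemma MGood_const {n} (c : C) : MGood (fun _ : Idx n -> C => c).
Proof.
  exists (fun _ _ => RtoC 0). intros w. split.
  - intros i. apply isd_const.
  - rewrite sumIdx_0. apply isd_const.
Qed.

Lemma MGood_plus {n} (F G : (Idx n -> C) -> C) : MGood F -> MGood G -> MGood (fun w => F w + G w).
Proof.
  intros [dF HF] [dG HG]. exists (fun i w => dF i w + dG i w). intros w.
  destruct (HF w) as [F1 F2]. destruct (HG w) as [G1 G2]. split.
  - intros i. apply isd_plus; auto.
  - rewrite sumIdx_plus. apply isd_plus; auto.
Qed.

Lemma MGood_mult {n} (F G : (Idx n -> C) -> C) : MGood F -> MGood G -> MGood (fun w => F w * G w).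
Proof.
  intros [dF HF] [dG HG]. exists (fun i w => dF i w * G w + F w * dG i w). intros w.
  destruct (HF w) as [F1 F2]. destruct (HG w) as [G1 G2]. split.
  - intros i. eapply isd_eq. apply isd_mult; auto. cbv beta. rewrite upd_same. reflexivity.
  - eapply isd_eq. apply isd_mult; [exact F2 | exact G2]. cbv beta. rewrite shift0, sumIdx_plus.
    rewrite <- (sumIdx_scal (F w)). f_equal.
    rewrite Cmult_comm, <- sumIdx_scal. apply sumIdx_ext. intros; ring.
Qed.

Lemma MGood_coord {n} k : MGood (fun w : Idx n -> C => ext (RtoC 0) w k).
Proof.
  destruct (lt_dec k n) as [Hk|Hk].
  - exists (fun i _ => if Nat.eq_dec (proj1_sig i) k then RtoC 1 else RtoC 0). intros w. split.
    + intros i. destruct (Nat.eq_dec (proj1_sig i) k) as [E|E].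
      * eapply isd_ext. 2: apply isd_id. intros s. rewrite (ext_in _ _ k Hk).
        rewrite <- (upd_eq w i s) at 1. f_equal. apply Idx_eq. simpl. auto.
      * eapply isd_ext. 2: apply (isd_const (ext (RtoC 0) w k)). intros s.
        rewrite !(ext_in _ _ k Hk). rewrite upd_neq. reflexivity. simpl. auto.
    + rewrite sumIdx_ind by exact Hk.
      apply isd_eq with (RtoC 0 + RtoC 1); [| ring].
      eapply isd_ext. 2: apply isd_plus; [apply (isd_const (ext (RtoC 0) w k)) | apply isd_id].
      intros t. rewrite !(ext_in _ _ k Hk). reflexivity.
      Unshelve. all: auto.
  - apply (MGood_ext (fun _ => RtoC 0)). intros w. rewrite ext_out; auto. lia.
    apply MGood_const.
Qed.

Lemma MGood_pow {n} (F : (Idx n -> C) -> C) m : MGood F -> MGood (fun w => F w ^ m).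
Proof.
  intros H. induction m; simpl. apply MGood_const.
  apply (MGood_mult F (fun w => F w ^ m)); auto.
Qed.

Lemma MGood_fold_plus {n A} (l : list A) (F : A -> (Idx n -> C) -> C) :
  (forall a, In a l -> MGood (F a)) -> MGood (fun w => fold_right Cplus 0 (map (fun a => F a w) l)).
Proof.
  induction l; intros H; simpl. apply MGood_const.
  apply (MGood_plus (F a) (fun w => fold_right Cplus 0 (map (fun a => F a w) l))).
  apply H; simpl; auto. apply IHl. intros; apply H; simpl; auto.
Qed.

Lemma MGood_fold_mult {n A} (l : list A) (F : A -> (Idx n -> C) -> C) :
  (forall a, In a l -> MGood (F a)) -> MGood (fun w => fold_right Cmult 1 (map (fun a => F a w) l)).
Proof.
  induction l; intros H; simpl. apply MGood_const.
  apply (MGood_mult (F a) (fun w => fold_right Cmult 1 (map (fun a => F a w) l))).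
  apply H; simpl; auto. apply IHl. intros; apply H; simpl; auto.
Qed.

Lemma MGood_mpoly {n} (p : list (C * (Idx n -> nat))) : MGood (fun w => mpoly_eval p w).
Proof.
  unfold mpoly_eval.
  apply (MGood_fold_plus p (fun ce w => fst ce * fold_right Cmult 1
        (map (fun k => Cpow (ext (RtoC 0) w k) (ext 0%nat (snd ce) k)) (seq 0 n)))).
  intros ce _.
  apply (MGood_mult (fun _ => fst ce)). apply MGood_const.
  apply (MGood_fold_mult (seq 0 n) (fun k w => Cpow (ext (RtoC 0) w k) (ext 0%nat (snd ce) k))).
  intros k _. apply (MGood_pow (fun w => ext (RtoC 0) w k)). apply MGood_coord.
Qed.

Lemma MGood_diag {n} (N : nat) : MGood (fun w : Idx n -> C => diag_prod N w).
Proof.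
  unfold diag_prod.
  assert (Hf : forall (l : list nat) (h : nat -> list nat) (F : nat -> nat -> (Idx n -> C) -> C),
    (forall a b, MGood (F a b)) ->
    MGood (fun w => fold_right Cmult 1 (flat_map (fun a => map (fun b => F a b w) (h a)) l))).
  { induction l; intros h F HF; simpl. apply MGood_const.
    apply (MGood_ext (fun w => fold_right Cmult 1 (map (fun b => F a b w) (h a)) *
             fold_right Cmult 1 (flat_map (fun a => map (fun b => F a b w) (h a)) l))).
    intros w. symmetry. apply fold_mult_app.
    apply (MGood_mult (fun w => fold_right Cmult 1 (map (fun b => F a b w) (h a)))
             (fun w => fold_right Cmult 1 (flat_map (fun a => map (fun b => F a b w) (h a)) l))).
    apply MGood_fold_mult. intros; apply HF. apply IHl. auto. }
  apply (Hf (seq 0 n) (fun a => seq (S a) (n - S a)) (fun a b w => Cpow (ext (RtoC 0) w a - ext (RtoC 0) w b) N)).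
  intros a b. apply (MGood_pow (fun w => ext (RtoC 0) w a - ext (RtoC 0) w b)).
  apply (MGood_ext (fun w => ext (RtoC 0) w a + RtoC (-1) * ext (RtoC 0) w b)). intros; ring.
  apply MGood_plus. apply MGood_coord. apply (MGood_mult (fun _ => RtoC (-1))). apply MGood_const. apply MGood_coord.
Qed.

Open Scope C_scope.

Lemma fin_min (g : nat -> R) n : (forall j, (j < n)%nat -> (0 < g j)%R) ->
  exists d, (0 < d)%R /\ forall j, (j < n)%nat -> (d <= g j)%R.
Proof.
  induction n; intros H.
  - exists 1%R. split. lra. intros; lia.
  - destruct IHn as [d [Hd1 Hd2]]. intros; apply H; lia.
    exists (Rmin d (g n)). split. apply Rmin_pos; auto.
    intros j Hj. destruct (Nat.eq_dec j n). subst. apply Rmin_r.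
    eapply Rle_trans. apply Rmin_l. apply Hd2. lia.
Qed.

Lemma in_Fn_upd_loc {n} (w : Idx n -> C) (i : Idx n) : in_Fn w ->
  exists d, (0 < d)%R /\ forall s, (Cmod (s - w i) < d)%R -> in_Fn (upd w i s).
Proof.
  intros Hw.
  destruct (fin_min (fun j => if Nat.eq_dec j (proj1_sig i) then 1%R else Cmod (ext (RtoC 0) w j - w i)) n)
    as [d [Hd1 Hd2]].
  { intros j Hj. destruct Nat.eq_dec. lra. apply Cmod_gt_0. rewrite (ext_in _ _ j Hj).
    intro E. apply (Hw (exist _ j Hj) i). simpl. auto.
    replace (w (exist _ j Hj)) with (w (exist _ j Hj) - w i + w i) by ring. rewrite E. ring. }
  exists d. split; auto. intros s Hs j k Hjk.
  assert (Hgen : forall k, proj1_sig k <> proj1_sig i -> s <> w k).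
  { intros k0 Hk0 E. destruct k0 as [k0 Hk0']. specialize (Hd2 k0 Hk0').
    destruct Nat.eq_dec. simpl in Hk0. congruence.
    rewrite (ext_in _ _ k0 Hk0') in Hd2. rewrite <- E in Hd2. lra. }
  destruct (Nat.eq_dec (proj1_sig j) (proj1_sig i)) as [Ej|Ej];
  destruct (Nat.eq_dec (proj1_sig k) (proj1_sig i)) as [Ek|Ek].
  - lia.
  - unfold upd. destruct Nat.eq_dec; [|congruence]. destruct Nat.eq_dec; [congruence|]. apply Hgen; auto.
  - unfold upd. destruct Nat.eq_dec; [congruence|]. destruct Nat.eq_dec; [|congruence].
    intro E. apply (Hgen j); auto.
  - rewrite !upd_neq; auto.
Qed.

Lemma fold_mult_nz (l : list C) : (forall x, In x l -> x <> 0) -> fold_right Cmult 1 l <> 0.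
Proof.
  induction l; simpl; intros H.
  - intro E. apply RtoC_inj in E. lra.
  - apply Cmult_neq_0. apply H; auto. apply IHl. intros; apply H; auto.
Qed.

Lemma diag_nz {n} (N : nat) (w : Idx n -> C) : in_Fn w -> diag_prod N w <> 0.
Proof.
  intros Hw. unfold diag_prod. apply fold_mult_nz. intros x Hx.
  apply in_flat_map in Hx. destruct Hx as [a [Ha Hx]]. apply in_map_iff in Hx.
  destruct Hx as [b [Eb Hb]]. subst x. apply in_seq in Ha. apply in_seq in Hb.
  apply Cpow_nz. assert (Ha' : (a < n)%nat) by lia. assert (Hb' : (b < n)%nat) by lia.
  rewrite (ext_in _ _ a Ha'), (ext_in _ _ b Hb'). intro E.
  apply (Hw (exist _ a Ha') (exist _ b Hb')). simpl. lia.
  replace (w (exist _ a Ha')) with (w (exist _ a Ha') - w (exist _ b Hb') + w (exist _ b Hb')) by ring.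
  rewrite E. ring.
Qed.

Lemma flat_map_ext_in' {A B} (f g : A -> list B) (l : list A) :
  (forall a, In a l -> f a = g a) -> flat_map f l = flat_map g l.
Proof. induction l; simpl; intros H; auto. rewrite H, IHl; auto. Qed.

Lemma diag_shift {n} N (w : Idx n -> C) t : diag_prod N (fun j => w j + t) = diag_prod N w.
Proof.
  unfold diag_prod. f_equal. apply flat_map_ext_in'. intros a Ha. apply map_ext_in. intros b Hb.
  apply in_seq in Ha. apply in_seq in Hb.
  assert (Ha' : (a < n)%nat) by lia. assert (Hb' : (b < n)%nat) by lia.
  rewrite !(ext_in _ _ a Ha'), !(ext_in _ _ b Hb'). f_equal. ring.
Qed.

Lemma in_Fn_shift {n} (w : Idx n -> C) t : in_Fn w -> in_Fn (fun j => w j + t).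
Proof.
  intros Hw j k Hjk E. apply (Hw j k Hjk).
  replace (w j) with (w j + t - t) by ring. rewrite E. ring.
Qed.

Lemma line_deriv {n} (F : (Idx n -> C) -> C) (p : list (C * (Idx n -> nat))) (N : nat)
  (w : Idx n -> C) (d : Idx n -> C) :
  (forall z, in_Fn z -> F z = mpoly_eval p z / diag_prod N z) ->
  in_Fn w ->
  (forall i, isd (fun s => F (upd w i s)) (w i) (d i)) ->
  isd (fun t => F (fun j => w j + t)) 0 (sumIdx d).
Proof.
  intros HF Hw Hd.
  destruct (MGood_mpoly p) as [dP HP]. destruct (MGood_diag (n := n) N) as [dD HD].
  destruct (HP w) as [P1 P2]. destruct (HD w) as [D1 D2].
  assert (Dnz := diag_nz N w Hw).
  assert (Eq1 : forall i, d i * diag_prod N w + F w * dD i w = dP i w).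
  { intros i. destruct (in_Fn_upd_loc w i Hw) as [del [Hdel Hloc]].
    assert (M : isd (fun s => F (upd w i s) * diag_prod N (upd w i s)) (w i)
                 (d i * diag_prod N (upd w i (w i)) + F (upd w i (w i)) * dD i w)).
    { apply isd_mult. apply Hd. apply D1. }
    rewrite upd_same in M.
    apply (isd_ext_loc _ (fun s => mpoly_eval p (upd w i s)) _ _ del Hdel) in M.
    - eapply isd_unique. exact M. exact (P1 i).
    - intros s Hs. rewrite HF by (apply Hloc; auto). field. apply diag_nz. apply Hloc; auto. }
  assert (Eq2 : sumIdx (fun i => dD i w) = 0).
  { eapply isd_unique. exact D2. eapply isd_ext. 2: apply (isd_const (diag_prod N w)).
    intros t. symmetry. apply diag_shift. }
  assert (Eq3 : isd (fun t => F (fun j => w j + t)) 0 (sumIdx (fun i => dP i w) * / diag_prod N w)).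
  { eapply isd_eq. eapply isd_ext.
    2: apply (isd_mult (fun t => mpoly_eval p (fun j => w j + t)) (fun _ => / diag_prod N w)); [exact P2 | apply isd_const].
    intros t. cbv beta. rewrite HF by (apply in_Fn_shift; auto). rewrite diag_shift. reflexivity.
    cbv beta. ring. }
  eapply isd_eq. exact Eq3.
  transitivity (sumIdx (fun i => / diag_prod N w * dP i w + (- F w / diag_prod N w) * dD i w)).
  - rewrite sumIdx_plus, sumIdx_scal, sumIdx_scal, Eq2. ring.
  - apply sumIdx_ext. intros i. rewrite <- Eq1. field. exact Dnz.
Qed.

Open Scope C_scope.

Section WD.
Context {W : ModuleSpace C_Ring} (projW : C -> W -> W) (L1W : W -> W).

Lemma scal0 (x : W) : scal (RtoC 0) x = zero.
Proof. exact (scal_zero_l x). Qed.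
Lemma scal1 (x : W) : scal (RtoC 1) x = x.
Proof. exact (scal_one x). Qed.

Lemma lin_zero (f : W -> W) : Defs.is_linear f -> f zero = zero.
Proof.
  intros H. specialize (H (RtoC 0) (RtoC 0) zero zero). rewrite !scal0, plus_zero_r in H. exact H.
Qed.

Lemma lin_plus (f : W -> W) x y : Defs.is_linear f -> f (plus x y) = plus (f x) (f y).
Proof. intros H. specialize (H (RtoC 1) (RtoC 1) x y). rewrite !scal1 in H. exact H. Qed.

Lemma lin_scal (f : W -> W) a x : Defs.is_linear f -> f (scal a x) = scal a (f x).
Proof.
  intros H. specialize (H a (RtoC 0) x zero). rewrite !scal0, !plus_zero_r in H. exact H.
Qed.

Lemma linfun_zero (g : W -> C) : is_linfun g -> g zero = 0.
Proof.
  intros H. specialize (H (RtoC 0) (RtoC 0) zero zero). rewrite !scal0, plus_zero_r in H. rewrite H. ring.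
Qed.

Lemma linfun_plus (g : W -> C) x y : is_linfun g -> g (plus x y) = g x + g y.
Proof. intros H. specialize (H (RtoC 1) (RtoC 1) x y). rewrite !scal1 in H. rewrite H. ring. Qed.

Lemma linfun_scal (g : W -> C) a x : is_linfun g -> g (scal a x) = a * g x.
Proof.
  intros H. pose proof (linfun_zero g H) as Z.
  specialize (H a (RtoC 0) x zero). rewrite !scal0, !plus_zero_r in H. rewrite H, Z. ring.
Qed.

Lemma iter_lin k : Defs.is_linear L1W -> Defs.is_linear (Nat.iter k L1W).
Proof.
  intros HL. induction k; simpl. intros a b x y. reflexivity.
  intros a b x y. unfold Defs.is_linear in *. simpl. rewrite IHk. apply HL.
Qed.

Lemma iter_wt k : (forall n w, projW n w = w -> projW (n + 1) (L1W w) = L1W w) ->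
  forall m x, projW m x = x -> projW (m + RtoC (INR k)) (Nat.iter k L1W x) = Nat.iter k L1W x.
Proof.
  intros Hwt. induction k; intros m x Hx.
  - simpl. replace (m + RtoC 0) with m by ring. exact Hx.
  - change (Nat.iter (S k) L1W x) with (L1W (Nat.iter k L1W x)).
    replace (m + RtoC (INR (S k))) with (m + RtoC (INR k) + 1) by (rewrite S_INR, RtoC_plus; ring).
    apply Hwt. apply IHk. exact Hx.
Qed.

Lemma NoDup_map_inj {A B} (h : A -> B) l : (forall x y, h x = h y -> x = y) -> NoDup l -> NoDup (map h l).
Proof.
  intros Hi Hl. induction Hl; simpl; constructor; auto.
  intro E. apply in_map_iff in E. destruct E as [y [Ey Hy]]. apply Hi in Ey. subst. auto.
Qed.

Definition Lk (HL : Defs.is_linear L1W) (Hwt : forall n w, projW n w = w -> projW (n + 1) (L1W w) = L1W w)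
  (Hid : forall n w, projW n (projW n w) = projW n w) (k : nat) (w' : Wdual projW) : Wdual projW.
Proof.
  refine (Build_Wdual W projW (fun x => dfun w' (Nat.iter k L1W x))
            (map (fun m => m - RtoC (INR k)) (dsupp w')) _ _ _).
  - intros a b x y. cbv beta. rewrite (iter_lin k HL). apply dfun_lin.
  - apply NoDup_map_inj. intros x y E. replace x with (x - RtoC (INR k) + RtoC (INR k)) by ring.
    rewrite E. ring. apply dsupp_nodup.
  - intros m x Hm. cbv beta. rewrite <- (iter_wt k Hwt m (projW m x)).
    apply dsupp_spec. intro E. apply Hm. apply in_map_iff. exists (m + RtoC (INR k)). split; auto. ring.
    apply Hid.
Defined.
End WD.

Open Scope C_scope.

Lemma lsum_C {A} (g : A -> C) (l : list A) : lsum g l = fold_right Cplus 0 (map g l).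
Proof.
  unfold lsum. rewrite map_id. induction l; cbn [fold_right map]. reflexivity. rewrite IHl. reflexivity.
Qed.

Lemma pairing_C {W : ModuleSpace C_Ring} {projW : C -> W -> W} (w' : Wdual projW) f :
  pairing w' f = fold_right Cplus 0 (map (fun n => dfun w' (f n)) (dsupp w')).
Proof. unfold pairing. apply lsum_C. Qed.

Section WD2.
Context {W : ModuleSpace C_Ring} (projW : C -> W -> W) (L1W : W -> W)
  (HL : Defs.is_linear L1W) (Hwt : forall n w, projW n w = w -> projW (n + 1) (L1W w) = L1W w)
  (Hid : forall n w, projW n (projW n w) = projW n w).

Lemma pairing_Lk k (w' : Wdual projW) f :
  pairing (Lk projW L1W HL Hwt Hid k w') f =
  fold_right Cplus 0 (map (fun m => dfun w' (Nat.iter k L1W (f (m - RtoC (INR k))))) (dsupp w')).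
Proof.
  rewrite pairing_C. simpl. rewrite map_map. reflexivity.
Qed.

Lemma pairing_Lk_0 (w' : Wdual projW) f : pairing (Lk projW L1W HL Hwt Hid 0 w') f = pairing w' f.
Proof.
  rewrite pairing_Lk, pairing_C. f_equal. apply map_ext. intros m. simpl.
  replace (m - RtoC 0) with m by ring. reflexivity.
Qed.

Lemma pairing_Lk_S k (w' : Wdual projW) f :
  pairing (Lk projW L1W HL Hwt Hid k w') (Lbar L1W f) = pairing (Lk projW L1W HL Hwt Hid (S k) w') f.
Proof.
  rewrite !pairing_Lk. f_equal. apply map_ext. intros m. unfold Lbar.
  rewrite Nat.iter_succ_r. f_equal. f_equal. f_equal. f_equal.
  rewrite S_INR, RtoC_plus. ring.
Qed.
End WD2.

Open Scope C_scope.

Lemma list_bound (l : list C) (r : R) : exists K : nat, forall m, In m l -> (Re m - r < INR K)%R.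
Proof.
  induction l.
  - exists 0%nat. intros m [].
  - destruct IHl as [K HK]. destruct (INR_unbounded (Re a - r)) as [K2 HK2].
    exists (max K K2). intros m [E|Hm].
    + subst. eapply Rlt_le_trans. apply HK2. apply le_INR. lia.
    + eapply Rlt_le_trans. apply HK; auto. apply le_INR. lia.
Qed.

Lemma fold_zero {A} (g : A -> C) l : (forall a, In a l -> g a = 0) -> fold_right Cplus 0 (map g l) = 0.
Proof. induction l; simpl; intros H. reflexivity. rewrite H, IHl; auto. ring. Qed.

Lemma fold_sum_swap {A} (G : A -> nat -> C) l K :
  fold_right Cplus 0 (map (fun m => sum_n (fun k => G m k) K) l)
  = sum_n (fun k => fold_right Cplus 0 (map (fun m => G m k) l)) K.
Proof.
  induction l; cbn [fold_right map].
  - symmetry. induction K. rewrite csum_0. reflexivity. rewrite csum_S, IHK. ring.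
  - rewrite IHl. rewrite <- csum_plus. reflexivity.
Qed.

Lemma fold_plus_scal' {A} (c : C) (a : A -> C) l :
  fold_right Cplus 0 (map (fun k => c * a k) l) = c * fold_right Cplus 0 (map a l).
Proof. induction l; simpl. ring. rewrite IHl. ring. Qed.

Section WD3.
Context {W : ModuleSpace C_Ring} (projW : C -> W -> W) (L1W : W -> W)
  (HL : Defs.is_linear L1W) (Hwt : forall n w, projW n w = w -> projW (n + 1) (L1W w) = L1W w)
  (Hid : forall n w, projW n (projW n w) = projW n w) (r : R)
  (Hlow : forall n w, (Re n < r)%R -> projW n w = zero).

Lemma iter_zero k : Nat.iter k L1W zero = zero.
Proof. induction k; simpl. reflexivity. rewrite IHk. apply lin_zero; auto. Qed.

Lemma Wbar_low (f : C -> W) m : is_Wbar projW f -> (Re m < r)%R -> f m = zero.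
Proof. intros Hf Hm. rewrite <- (Hf m). apply Hlow. auto. Qed.

Lemma pairing_Lk_vanish (w' : Wdual projW) : exists K, forall k f, (K <= k)%nat -> is_Wbar projW f ->
  pairing (Lk projW L1W HL Hwt Hid k w') f = 0.
Proof.
  destruct (list_bound (dsupp w') r) as [K HK]. exists K. intros k f Hk Hf.
  rewrite pairing_Lk. apply fold_zero. intros m Hm.
  rewrite (Wbar_low f). rewrite iter_zero. apply linfun_zero. apply dfun_lin.
  auto. specialize (HK m Hm). apply le_INR in Hk. unfold Re in *. simpl. lra.
Qed.

Lemma efsum_eq {G : AbelianMonoid} (t : nat -> G) K : (forall k, (K < k)%nat -> t k = zero) -> efsum t = sum_n t K.
Proof.
  intros H. unfold efsum.
  destruct (epsilon_spec (inhabits zero)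
    (fun x => exists K0, (forall k, (K0 <= k)%nat -> t k = zero) /\ x = sum_n t K0)) as [K0 [H0 E0]].
  { exists (sum_n t (S K)). exists (S K). split. intros; apply H; lia. reflexivity. }
  rewrite E0.
  rewrite <- (sum_n_eventual t K0) with (m := max K K0) by (intros; try apply H0; lia).
  apply sum_n_eventual. intros; apply H; lia. lia.
Qed.

Lemma linfun_sum_n (g : W -> C) (u : nat -> W) K : is_linfun g -> g (sum_n u K) = sum_n (fun k => g (u k)) K.
Proof.
  intros Hg. induction K. rewrite !sum_O. reflexivity.
  rewrite !sum_Sn. rewrite linfun_plus by auto. rewrite IHK. reflexivity.
Qed.

Lemma pairing_expLbar (w' : Wdual projW) zz f K :
  is_Wbar projW f -> (forall m, In m (dsupp w') -> (Re m - r < INR K)%R) ->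
  pairing w' (expLbar L1W zz f)
  = sum_n (fun k => zz ^ k / RtoC (INR (fact k)) * pairing (Lk projW L1W HL Hwt Hid k w') f) K.
Proof.
  intros Hf HK. rewrite pairing_C.
  transitivity (fold_right Cplus 0 (map (fun m => sum_n (fun k => zz ^ k / RtoC (INR (fact k)) *
       dfun w' (Nat.iter k L1W (f (m - RtoC (INR k))))) K) (dsupp w'))).
  - f_equal. apply map_ext_in. intros m Hm. unfold expLbar. rewrite (efsum_eq _ K).
    + rewrite linfun_sum_n by apply dfun_lin. apply sum_n_ext. intros k. apply linfun_scal. apply dfun_lin.
    + intros k Hk. rewrite (Wbar_low f). rewrite iter_zero. apply scal_zero_r. auto.
      specialize (HK m Hm). assert (INR K < INR k)%R by (apply lt_INR; lia). unfold Re in *. simpl. lra.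
  - rewrite fold_sum_swap. apply sum_n_ext. intros k. rewrite fold_plus_scal'. rewrite pairing_Lk. reflexivity.
Qed.
End WD3.

Open Scope C_scope.

Lemma Good_coord_shift rho {n} (z : Idx n -> C) k : Good rho (fun t => ext (RtoC 0) (fun j => z j + t) k).
Proof.
  destruct (lt_dec k n) as [Hk|Hk].
  - apply (Good_ext rho (fun t => ext (RtoC 0) z k + t)). intros t _. rewrite !(ext_in _ _ k Hk). reflexivity.
    apply Good_shift.
  - apply (Good_ext rho (fun _ => RtoC 0)). intros t _. rewrite ext_out. reflexivity. lia. apply Good_const.
Qed.

Lemma isd_shift_arg (F : C -> C) t l : isd (fun s => F (t + s)) 0 l -> isd F t l.
Proof.
  intros H. apply isd_eq with (1 * l); [|ring].
  eapply isd_ext. 2: apply (isd_comp (fun s => F (t + s)) (fun u => u - t)).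
  - intros u. cbv beta. f_equal. ring.
  - replace (t - t) with (RtoC 0) by ring. exact H.
  - apply isd_eq with (1 + 0). apply isd_plus. apply isd_id. apply isd_const. ring.
Qed.

Section PartA.
Context (V : ModuleSpace C_Ring) (projV : Z -> V -> V) (YV : V -> Z -> V -> V) (one : V)
  (W : ModuleSpace C_Ring) (projW : C -> W -> W) (YW : V -> Z -> W -> W)
  (L0W L1W : W -> W)
  (HW : is_GRGModule projV YV one projW YW L0W L1W)
  (n : nat)
  (Phi : (Idx n -> V) -> (Idx n -> C) -> C -> W)
  (HPhi_W : forall v, in_Wtilde projW (Phi v))
  (HPhi_D : L1_derivative_property (LV1 YV one) projW L1W Phi).

Definition LkW := Lk projW L1W (md_L1_lin _ _ _ _ _ _ _ HW) (md_L1_wt _ _ _ _ _ _ _ HW)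
                    (md_proj_idem _ _ _ _ _ _ _ HW).

Lemma partA (v : Idx n -> V) (w' : Wdual projW) (z : Idx n -> C) (zz : C) :
  in_Fn z ->
  pairing w' (expLbar L1W zz (Phi v z)) = pairing w' (Phi v (fun j => (z j + zz)%C)).
Proof.
  intros Hz.
  set (g := fun k t => pairing (LkW k w') (Phi v (fun j => z j + t))).
  destruct HPhi_D as [Hi Hii].
  assert (Hg : forall k t, isd (g k) t (g (S k) t)).
  { intros k t. apply isd_shift_arg.
    set (w := fun j => z j + t). assert (Hw : in_Fn w) by (apply in_Fn_shift; auto).
    destruct (proj2 (HPhi_W v) (LkW k w')) as [p [N HpN]].
    apply isd_eq with (sumIdx (fun i => pairing (LkW k w') (Phi (upd v i (LV1 YV one (v i))) w))).
    eapply isd_ext.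
    2: apply (line_deriv (fun x => pairing (LkW k w') (Phi v x)) p N w
                (fun i => pairing (LkW k w') (Phi (upd v i (LV1 YV one (v i))) w)) HpN Hw).
    - intros s. cbv beta. unfold g, w. f_equal. f_equal. apply functional_extensionality. intros j. ring.
    - intros i. apply Hi. exact Hw.
    - rewrite (Hii v (LkW k w') w Hw). unfold LkW. rewrite pairing_Lk_S. reflexivity.
      intros i. apply Hi. exact Hw. }
  destruct (md_lower _ _ _ _ _ _ _ HW) as [r Hr].
  destruct (pairing_Lk_vanish projW L1W (md_L1_lin _ _ _ _ _ _ _ HW) (md_L1_wt _ _ _ _ _ _ _ HW)
                (md_proj_idem _ _ _ _ _ _ _ HW) r Hr w') as [K1 HK1].
  destruct (list_bound (dsupp w') r) as [K2 HK2].
  set (K := max K1 K2).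
  assert (HWb : is_Wbar projW (Phi v z)) by (apply (proj1 (HPhi_W v)); auto).
  assert (Hg0 : forall k, g k 0 = pairing (LkW k w') (Phi v z)).
  { intros k. unfold g. rewrite shift0. reflexivity. }
  destruct (proj2 (HPhi_W v) w') as [p [N HpN]].
  assert (HG : Good (Cmod zz + 1) (g 0%nat)).
  { apply (Good_ext _ (fun t => mpoly_eval p (fun j => z j + t) * / diag_prod N z)).
    - intros t _. unfold g, LkW. rewrite pairing_Lk_0. rewrite HpN by (apply in_Fn_shift; auto).
      rewrite diag_shift. reflexivity.
    - apply (Good_mult _ (fun t => mpoly_eval p (fun j => z j + t)) (fun _ => / diag_prod N z)).
      apply (Good_mpoly _ (fun t j => z j + t)). intros k. apply Good_coord_shift.
      apply Good_const. }
  destruct (Good_derivs _ (g 0%nat) g HG (fun _ _ => eq_refl) (fun k t _ => Hg k t) zz ltac:(lra))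
    as [_ Hser].
  assert (Hfin : forall k, (K < k)%nat -> / RtoC (INR (fact k)) * g k 0 * zz ^ k = 0).
  { intros k Hk. rewrite Hg0. unfold LkW. rewrite HK1. ring. lia. exact HWb. }
  pose proof (iss_fin _ K Hfin) as Hser2.
  pose proof (is_series_C_unique _ _ _ Hser Hser2) as U.
  transitivity (g 0%nat zz).
  2:{ unfold g, LkW. rewrite pairing_Lk_0. reflexivity. }
  rewrite U.
  rewrite (pairing_expLbar projW L1W (md_L1_lin _ _ _ _ _ _ _ HW) (md_L1_wt _ _ _ _ _ _ _ HW)
                (md_proj_idem _ _ _ _ _ _ _ HW) r Hr w' zz (Phi v z) K HWb).
  - apply sum_n_ext. intros k. rewrite Hg0. unfold LkW. cnorm; match goal with |- @eq _ ?x ?y => change (@eq C x y) end; field. apply INR_fact_nz.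
  - intros m Hm. eapply Rlt_le_trans. apply HK2; auto. apply le_INR. lia.
Qed.
End PartA.

Open Scope C_scope.

Lemma fmin_le {A} (g : A -> R) b l j : In j l -> (fold_right Rmin b (map g l) <= g j)%R.
Proof.
  induction l; simpl; intros H. destruct H.
  destruct H as [E|H]. subst. apply Rmin_l. eapply Rle_trans. apply Rmin_r. auto.
Qed.

Lemma fmin_gt {A} (g : A -> R) b l c : (c < b)%R -> (forall j, In j l -> (c < g j)%R) ->
  (c < fold_right Rmin b (map g l))%R.
Proof.
  induction l; simpl; intros Hb H. auto.
  apply Rmin_glb_lt. apply H; auto. apply IHl; auto.
Qed.

Lemma choose_rho {n} (z : Idx n -> C) (zz : C) :
  (forall j k : Idx n, proj1_sig j <> proj1_sig k -> (Cmod zz < Cmod (z j - z k))%R) ->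
  exists rho, (Cmod zz < rho)%R /\ forall j k : Idx n, proj1_sig j <> proj1_sig k -> (rho <= Cmod (z j - z k))%R.
Proof.
  intros Hd. set (B := (Cmod zz + 1)%R).
  set (g := fun j : nat => fold_right Rmin B (map (fun k => if Nat.eq_dec j k then B
              else Cmod (ext (RtoC 0) z j - ext (RtoC 0) z k)) (seq 0 n))).
  exists (fold_right Rmin B (map g (seq 0 n))). split.
  - apply fmin_gt. unfold B; lra. intros j Hj. apply in_seq in Hj. apply fmin_gt. unfold B; lra.
    intros k Hk. apply in_seq in Hk. destruct Nat.eq_dec. unfold B; lra.
    assert (Hj' : (j < n)%nat) by lia. assert (Hk' : (k < n)%nat) by lia.
    rewrite (ext_in _ _ j Hj'), (ext_in _ _ k Hk'). apply Hd. simpl. auto.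
  - intros [j Hj] [k Hk] Hjk. simpl in Hjk.
    eapply Rle_trans. apply (fmin_le g B (seq 0 n) j). apply in_seq. lia.
    unfold g. eapply Rle_trans. apply (fmin_le _ B (seq 0 n) k). apply in_seq. lia.
    destruct Nat.eq_dec. congruence. rewrite (ext_in _ _ j Hj), (ext_in _ _ k Hk). apply Req_le. reflexivity.
Qed.

Section PartB.
Context (V : ModuleSpace C_Ring) (projV : Z -> V -> V) (YV : V -> Z -> V -> V) (one : V)
  (W : ModuleSpace C_Ring) (projW : C -> W -> W) (YW : V -> Z -> W -> W)
  (L0W L1W : W -> W)
  (n : nat)
  (Phi : (Idx n -> V) -> (Idx n -> C) -> C -> W)
  (HPhi_W : forall v, in_Wtilde projW (Phi v))
  (HPhi_D : L1_derivative_property (LV1 YV one) projW L1W Phi).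

Lemma partB (v : Idx n -> V) (w' : Wdual projW) (z : Idx n -> C) (i : Idx n) (zz : C) :
  in_Fn z ->
  (forall j k : Idx n, proj1_sig j <> proj1_sig k -> (Cmod zz < Cmod (z j - z k)%C)%R) ->
  let a := fun k : nat =>
    (/ RtoC (INR (fact k)) *
     pairing w' (Phi (upd v i (Nat.iter k (LV1 YV one) (v i))) z))%C in
  ex_series (fun k => Cmod (a k * Cpow zz k)%C) /\
  is_series (K := C_AbsRing) (V := C_NormedModule)
    (fun k => (a k * Cpow zz k)%C)
    (pairing w' (Phi v (upd z i (z i + zz)%C))).
Proof.
  intros Hz Hd a.
  destruct (choose_rho z zz Hd) as [rho [Hrho1 Hrho2]].
  set (Lt := fun t => upd z i (z i + t)).
  set (i0 := proj1_sig i).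
  assert (HL : forall t, (Cmod t < rho)%R -> in_Fn (Lt t)).
  { intros t Ht j k Hjk. unfold Lt, upd.
    assert (Hne : forall k : Idx n, proj1_sig k <> proj1_sig i -> z i + t <> z k).
    { intros k0 Hk0 E. assert (t = z k0 - z i) by (rewrite <- E; ring). subst t.
      specialize (Hrho2 k0 i Hk0). lra. }
    destruct (Nat.eq_dec (proj1_sig j) (proj1_sig i)); destruct (Nat.eq_dec (proj1_sig k) (proj1_sig i)).
    - lia.
    - apply Hne; auto.
    - intro E. apply (Hne j); auto.
    - apply Hz; auto. }
  destruct (proj2 (HPhi_W v) w') as [p [N HpN]].
  assert (HG : Good rho (fun t => pairing w' (Phi v (Lt t)))).
  { apply (Good_ext _ (fun t => mpoly_eval p (Lt t) * / diag_prod N (Lt t))).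
    - intros t Ht. rewrite HpN by auto. reflexivity.
    - apply Good_mult.
      + apply Good_mpoly. intros k. destruct (lt_dec k n) as [Hk|Hk].
        * destruct (Nat.eq_dec k i0) as [E|E].
          -- apply (Good_ext _ (fun t => z i + t)). intros t _. rewrite (ext_in _ _ k Hk).
             unfold Lt, upd. simpl. destruct Nat.eq_dec; [reflexivity|]. unfold i0 in E. congruence.
             apply Good_shift.
          -- apply (Good_ext _ (fun _ => ext (RtoC 0) z k)). intros t _. rewrite !(ext_in _ _ k Hk).
             unfold Lt, upd. simpl. destruct Nat.eq_dec; [|reflexivity]. unfold i0 in E. congruence.
             apply Good_const.
        * apply (Good_ext _ (fun _ => RtoC 0)). intros t _. rewrite ext_out. reflexivity. lia.
          apply Good_const.
      + apply Good_invdiag. intros a0 b0 Hab.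
        assert (Ha' : (a0 < n)%nat) by lia. assert (Hb' : (b0 < n)%nat) by lia.
        assert (Ei : forall t m (Hm : (m < n)%nat), ext (RtoC 0) (Lt t) m =
                  if Nat.eq_dec m i0 then z i + t else z (exist _ m Hm)).
        { intros t m Hm. rewrite (ext_in _ _ m Hm). unfold Lt, upd. simpl. reflexivity. }
        destruct (Nat.eq_dec a0 i0) as [Ea|Ea]; [|destruct (Nat.eq_dec b0 i0) as [Eb|Eb]].
        * right; left. exists (z i - z (exist _ b0 Hb')). split.
          -- apply Hrho2. simpl. unfold i0 in Ea. lia.
          -- intros t. rewrite (Ei t a0 Ha'), (Ei t b0 Hb').
             destruct Nat.eq_dec; [|congruence]. destruct Nat.eq_dec; [lia|]. ring.
        * right; right. exists (z i - z (exist _ a0 Ha')). split.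
          -- apply Hrho2. simpl. unfold i0 in Eb. lia.
          -- intros t. rewrite (Ei t a0 Ha'), (Ei t b0 Hb').
             destruct Nat.eq_dec; [congruence|]. destruct Nat.eq_dec; [|congruence]. ring.
        * left. exists (z (exist _ a0 Ha') - z (exist _ b0 Hb')). intros t.
          rewrite (Ei t a0 Ha'), (Ei t b0 Hb').
          destruct Nat.eq_dec; [congruence|]. destruct Nat.eq_dec; [congruence|]. reflexivity. }
  set (Hk := fun k t => pairing w' (Phi (upd v i (Nat.iter k (LV1 YV one) (v i))) (Lt t))).
  destruct HPhi_D as [Hi _].
  assert (Hder : forall k t, (Cmod t < rho)%R -> isd (Hk k) t (Hk (S k) t)).
  { intros k t Ht.
    pose proof (Hi (upd v i (Nat.iter k (LV1 YV one) (v i))) w' (Lt t) i (HL t Ht)) as D0.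
    unfold Lt in D0 at 2 3. rewrite upd_eq, upd_upd, upd_eq in D0.
    apply isd_eq with (1 * Hk (S k) t); [|ring].
    eapply isd_ext. 2: apply (isd_comp (fun s => pairing w' (Phi (upd v i (Nat.iter k (LV1 YV one) (v i)))
                                   (upd (Lt t) i s))) (fun u => z i + u)).
    - intros u. cbv beta. unfold Hk, Lt. rewrite upd_upd. reflexivity.
    - exact D0.
    - apply isd_eq with (0 + 1). apply isd_plus. apply isd_const. apply isd_id. ring. }
  assert (H0 : forall t, (Cmod t < rho)%R -> Hk 0%nat t = pairing w' (Phi v (Lt t))).
  { intros t _. unfold Hk. simpl. rewrite upd_same. reflexivity. }
  destruct (Good_derivs _ _ Hk HG H0 Hder zz Hrho1) as [S1 S2].
  assert (E : forall k, / RtoC (INR (fact k)) * Hk k 0 * zz ^ k = a k * zz ^ k).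
  { intros k. unfold a, Hk, Lt. replace (z i + 0) with (z i) by ring. rewrite upd_same. reflexivity. }
  split.
  - eapply ex_series_ext. 2: exact S1. intros k. cbv beta. rewrite E. reflexivity.
  - eapply (is_series_ext (K := C_AbsRing) (V := C_NormedModule)). 2: exact S2. intros k. cbv beta. rewrite E. reflexivity.
Qed.
End PartB.

Close Scope C_scope.
Close Scope R_scope.

Theorem proposition3p4
  (V : ModuleSpace C_Ring) (projV : Z -> V -> V) (YV : V -> Z -> V -> V) (one : V)
  (HV : is_GRVA projV YV one)
  (W : ModuleSpace C_Ring) (projW : C -> W -> W) (YW : V -> Z -> W -> W)
  (L0W L1W : W -> W)
  (HW : is_GRGModule projV YV one projW YW L0W L1W)
  (n : nat) (Hn : (1 <= n)%nat)
  (Phi : (Idx n -> V) -> (Idx n -> C) -> C -> W)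
  (HPhi_lin : multilinear_Phi Phi)
  (HPhi_W : forall v, in_Wtilde projW (Phi v))
  (HPhi_D : L1_derivative_property (LV1 YV one) projW L1W Phi) :
  (* (a) *)
  (forall (v : Idx n -> V) (w' : Wdual projW) (z : Idx n -> C) (zz : C),
     in_Fn z ->
     pairing w' (expLbar L1W zz (Phi v z))
     = pairing w' (Phi v (fun j => (z j + zz)%C)))
  /\
  (* (b) *)
  (forall (v : Idx n -> V) (w' : Wdual projW) (z : Idx n -> C) (i : Idx n) (zz : C),
     in_Fn z ->
     (forall j k : Idx n, proj1_sig j <> proj1_sig k -> (Cmod zz < Cmod (z j - z k)%C)%R) ->
     let a := fun k : nat =>
       (/ RtoC (INR (fact k)) *
        pairing w' (Phi (upd v i (Nat.iter k (LV1 YV one) (v i))) z))%C in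
     ex_series (fun k => Cmod (a k * Cpow zz k)%C) /\
     is_series (K := C_AbsRing) (V := C_NormedModule)
       (fun k => (a k * Cpow zz k)%C)
       (pairing w' (Phi v (upd z i (z i + zz)%C)))).
Proof.
  split.
  - intros v w' z zz Hz. eapply partA; eassumption.
  - intros v w' z i zz Hz Hd. eapply partB; eassumption.
Qed.
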